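(* Suppose Assumptions (A1)–(A3) hold and let $\{\boldsymbol x_k\},\{\boldsymbol v_k\}$ be generated by Algorithm 1 with parameters $\alpha>\beta>0$ and $\eta>0$. Define $\epsilon_1=(\alpha-\beta)\rho_2(L)-\frac12(2+3L_f^2)$, $\epsilon_2=\beta^2\rho(L)+(2\alpha^2+\beta^2)\rho^2(L)+\frac52L_f^2$, $\epsilon_3=\beta-\frac12-\frac\alpha{2\beta^2}-\frac1{2\beta\rho_2(L)}$, $\epsilon_4=2\beta^2+\frac12$, $\epsilon_5=\frac14-\frac1{2\beta}(\frac1\beta+\frac1{\rho_2(L)}+\frac\alpha\beta)L_f^2$, $\epsilon_6=\frac1{\beta^2}(1+\frac1{\rho_2(L)}+\frac\alpha\beta)L_f^2+\frac{L_f(1+L_f)}2$, and $$V_k=\frac12\|\boldsymbol x_k\|^2_{\boldsymbol K}+\frac12\Big\|\boldsymbol v_k+\frac1\beta\boldsymbol g^0_k\Big\|^2_{\boldsymbol Q+\frac\alpha\beta\boldsymbol K}+\boldsymbol x_k^\top\boldsymbol K\Big(\boldsymbol v_k+\frac1\beta\boldsymbol g^0_k\Big)+n(f(\bar x_k)-f^* ).$$ Then for all $k\in\mathbb N_0$, $$V_{k+1}\le V_k-\eta(\epsilon_1-\eta\epsilon_2)\|\boldsymbol x_k\|^2_{\boldsymbol K}-\eta(\epsilon_3-\eta\epsilon_4)\Big\|\boldsymbol v_k+\frac1\beta\boldsymbol g_k^0\Big\|^2_{\boldsymbol K}-\eta(\epsilon_5-\eta\epsilon_6)\|\bar{\boldsymbol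 g}_k\|^2-\frac\eta4\|\bar{\boldsymbol g}^0_k\|^2.$$
   Context: Setting: $n$ agents on weighted undirected graph $\mathcal G$ with Laplacian $L=(L_{ij})$; $\rho(L)$ largest and $\rho_2(L)$ smallest positive eigenvalue of $L$. $f=\frac1n\sum_if_i$, $f_i:\mathbb R^p\to\mathbb R$, $f^*=\min f$. Assumptions: (A1) $\mathcal G$ connected; (A2) $\arg\min f\ne\emptyset$, $f^*>-\infty$; (A3) each $\nabla f_i$ is $L_f$-Lipschitz. Algorithm 1: $x_{i,0}$ arbitrary, $\sum_jv_{j,0}=\mathbf 0_p$, $x_{i,k+1}=x_{i,k}-\eta(\alpha\sum_jL_{ij}x_{j,k}+\beta v_{i,k}+\nabla f_i(x_{i,k}))$, $v_{i,k+1}=v_{i,k}+\eta\beta\sum_jL_{ij}x_{j,k}$. Notation: $\boldsymbol x_k=\mathrm{col}(x_{i,k})$, $\boldsymbol v_k=\mathrm{col}(v_{i,k})$, $\bar x_k=\frac1n\sum_ix_{i,k}$, $\boldsymbol K=(I_n-\frac1n\mathbf 1\mathbf 1^\top)\otimes I_p$, $\boldsymbol H=\frac1n\mathbf 1\mathbf 1^\top\otimes I_p$, $\|z\|^2_M=z^\top Mz$, $\boldsymbol g_k=\mathrm{col}(\nabla f_i(x_{i,k}))$, $\bar{\boldsymbol g}_k=\boldsymbol H\boldsymbol g_k$, $\boldsymbol g_k^0=\mathrm{col}(\nabla f_i(\bar x_k))$, $\bar{\boldsymbol g}^0_k=\boldsymbol H\boldsymbol g^0_k$. $\boldsymbol Q=R\Lambda_1^{-1}R^\top\otimes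 I_p$, where $[\frac1{\sqrt n}\mathbf 1_n\ R]$ is an orthogonal matrix whose columns of $R$ are orthonormal eigenvectors of $L$ for its nonzero eigenvalues $0<\lambda_2\le\dots\le\lambda_n$ and $\Lambda_1=\mathrm{diag}(\lambda_2,\dots,\lambda_n)$ (so $R\Lambda_1^{-1}R^\top$ is the Moore–Penrose pseudoinverse of $L$). *)

(* Defs.v *)
From Stdlib Require Import Reals.
Open Scope R_scope.

(* vectors of R^p are represented as nat -> R, only coordinates l < p matter *)
Definition vec := nat -> R.

Fixpoint fsum (m : nat) (g : nat -> R) : R :=
  match m with
  | O => 0
  | S m' => fsum m' g + g m'
  end.

Definition dot (p : nat) (u w : vec) : R := fsum p (fun l => u l * w l).
Definition sqn (p : nat) (u : vec) : R := dot p u u.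
Definition norm (p : nat) (u : vec) : R := sqrt (sqn p u).
Definition vsub (u w : vec) : vec := fun l => u l - w l.

Definition is_grad (p : nat) (f : vec -> R) (g : vec) (x : vec) : Prop :=
  forall eps, 0 < eps -> exists delta, 0 < delta /\
    forall y, norm p (vsub y x) < delta ->
      Rabs (f y - f x - dot p g (vsub y x)) <= eps * norm p (vsub y x).

(* matrices n x n as nat -> nat -> R *)
Definition mmul (n : nat) (M N : nat -> nat -> R) : nat -> nat -> R :=
  fun i j => fsum n (fun k => M i k * N k j).

Definition laplacian (n : nat) (A : nat -> nat -> R) : nat -> nat -> R :=
  fun i j => if Nat.eqb i j
             then fsum n (fun k => if Nat.eqb k i then 0 else A i k)
             else - A i j.

Inductive reach (n : nat) (A : nat -> nat -> R) (i : nat) : nat -> Prop :=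
| reach_refl : reach n A i i
| reach_step : forall j k, reach n A i j -> (k < n)%nat -> 0 < A j k ->
               reach n A i k.

Definition connected (n : nat) (A : nat -> nat -> R) : Prop :=
  forall i j, (i < n)%nat -> (j < n)%nat -> reach n A i j.

Definition is_eigenvalue (n : nat) (M : nat -> nat -> R) (lam : R) : Prop :=
  exists v : nat -> R, (exists i, (i < n)%nat /\ v i <> 0) /\
    forall i, (i < n)%nat -> fsum n (fun j => M i j * v j) = lam * v i.

Definition largest_eigenvalue (n : nat) (M : nat -> nat -> R) (r : R) : Prop :=
  is_eigenvalue n M r /\ forall lam, is_eigenvalue n M lam -> lam <= r.

Definition smallest_pos_eigenvalue (n : nat) (M : nat -> nat -> R) (r : R)
  : Prop :=
  is_eigenvalue n M r /\ 0 < r /\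
  forall lam, is_eigenvalue n M lam -> 0 < lam -> r <= lam.

(* Q is the Moore-Penrose pseudoinverse of M (Penrose conditions) *)
Definition mp_pinv (n : nat) (M Q : nat -> nat -> R) : Prop :=
  (forall i j, (i < n)%nat -> (j < n)%nat ->
     mmul n (mmul n M Q) M i j = M i j) /\
  (forall i j, (i < n)%nat -> (j < n)%nat ->
     mmul n (mmul n Q M) Q i j = Q i j) /\
  (forall i j, (i < n)%nat -> (j < n)%nat ->
     mmul n M Q i j = mmul n M Q j i) /\
  (forall i j, (i < n)%nat -> (j < n)%nat ->
     mmul n Q M i j = mmul n Q M j i).

Definition Kmat (n : nat) : nat -> nat -> R :=
  fun i j => (if Nat.eqb i j then 1 else 0) - / INR n.

(* stacked vectors z = col(z_0,...,z_{n-1}), z_i in R^p *)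
(* z^T (M (x) I_p) w *)
Definition bil (n p : nat) (M : nat -> nat -> R) (z w : nat -> vec) : R :=
  fsum n (fun i => fsum n (fun j => M i j * dot p (z i) (w j))).
Definition quad (n p : nat) (M : nat -> nat -> R) (z : nat -> vec) : R :=
  bil n p M z z.
Definition sqn_stack (n p : nat) (z : nat -> vec) : R :=
  fsum n (fun i => sqn p (z i)).
Definition avg (n : nat) (z : nat -> vec) : vec :=
  fun l => / INR n * fsum n (fun i => z i l).
Definition Hstack (n : nat) (z : nat -> vec) : nat -> vec := fun _ => avg n z.

Definition fglob (n : nat) (F : nat -> vec -> R) (x : vec) : R :=
  / INR n * fsum n (fun i => F i x).

Definition gstack (G : nat -> vec -> vec) (x : nat -> vec) : nat -> vec :=
  fun i => G i (x i).
Definition g0stack (n : nat) (G : nat -> vec -> vec) (x : nat -> vec)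
  : nat -> vec := fun i => G i (avg n x).

Definition wstack (n : nat) (beta : R) (G : nat -> vec -> vec)
  (x v : nat -> vec) : nat -> vec :=
  fun i l => v i l + / beta * g0stack n G x i l.

Definition Lyap (n p : nat) (alpha beta : R) (Q : nat -> nat -> R)
  (F : nat -> vec -> R) (G : nat -> vec -> vec) (fstar : R)
  (x v : nat -> vec) : R :=
  / 2 * quad n p (Kmat n) x
  + / 2 * quad n p (fun i j => Q i j + alpha / beta * Kmat n i j)
                   (wstack n beta G x v)
  + bil n p (Kmat n) x (wstack n beta G x v)
  + INR n * (fglob n F (avg n x) - fstar).

(* Main.v *)
Require Import Defs.
From Stdlib Require Import Reals.
Open Scope R_scope.
From Stdlib Require Import Lra Lia FunctionalExtensionality.

Module SpecM.
From mathcomp Require Import all_boot all_algebra.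
From mathcomp Require Import Rstruct complex spectral.
Import GRing.Theory Num.Theory Num.Def.
Local Open Scope ring_scope.
Section S.
Local Open Scope sesquilinear_scope.
Local Open Scope complex_scope.
Variable R : rcfType.
Local Notation C := R[i].
Local Notation rc := (real_complex R).

Lemma spec_quad n (M : 'M[R]_n) (a b c : R) :
  M^T = M ->
  (forall lam (v : 'rV[R]_n), v *m M = lam *: v -> v != 0 ->
      0 <= a * lam ^+ 2 + b * lam + c) ->
  forall y : 'cV[R]_n, 0 <= (y^T *m (a *: (M *m M) + b *: M + c%:M) *m y) 0 0.
Proof.
move=> MT Hev y.
pose Mc := map_mx rc M.
have Mherm : Mc \is hermsymmx.
  apply: realsym_hermsym.
    by rewrite qualifE /= expr0 scale1r map_mx_id // /Mc map_trmx MT.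
  by apply/mxOverP => i j; rewrite mxE complex_real.
pose P := spectralmx Mc; pose d := spectral_diag Mc.
have PU : P \is unitarymx := spectral_unitarymx Mc.
have PPt : P *m P^t* = 1%:M by apply/unitarymxP.
have PtP : P^t* *m P = 1%:M.
  by rewrite -(invmx_unitary PU) mulVmx // unitarymx_unit.
have eqM : Mc = P^t* *m diag_mx d *m P.
  rewrite -invmx_unitary //; apply/orthomx_spectralP/hermitian_normalmx.
  exact: Mherm.
have dreal : d \is a realmx := hermitian_spectral_diag_real Mherm.
have dev k : exists r : R, d 0 k = r%:C /\ 0 <= a * r^+2 + b*r + c.
  have : d 0 k \is Num.real by apply: (mxOverP dreal).
  move/complex_realP => [r dr]; exists r; split => //.
  have : eigenvalue Mc (rc r).
    apply/eigenvalueP; exists (row k P).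
      rewrite {1}eqM !mulmxA -row_mul PPt. rewrite -[row k 1%:M *m _]row_mul mul1mx row_diag_mx -scalemxAl -rowE dr //.
    apply/eqP => /(congr1 (mulmx^~ (P^t*))); rewrite -row_mul PPt mul0mx.
    by move=> /rowP/(_ k); rewrite !mxE eqxx /= => /eqP; rewrite oner_eq0.
  rewrite /Mc eigenvalue_map. move=> /eigenvalueP [v vM v0]; exact: Hev vM v0.
pose N := a *: (M *m M) + b *: M + c%:M.
rewrite -ler0c.
have H1 (A : 'M[R]_1) : (A 0 0)%:C = (map_mx rc A) 0 0 by rewrite mxE.
rewrite H1.
rewrite !map_mxM -map_trmx /N map_mxD map_mxD !map_mxZ map_mxM map_scalar_mx -/Mc eqM.
pose e := \row_k (rc a * d 0 k ^+ 2 + rc b * d 0 k + rc c).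
have eE : rc a *: (diag_mx d *m diag_mx d) + rc b *: diag_mx d + (rc c)%:M = diag_mx e.
  apply/matrixP => i j; rewrite mulmx_diag !mxE; case: (i == j); rewrite /= ?mulr1n ?mulr0n ?expr2 ?mulr0 ?addr0 //.
have -> : rc a *: (P ^t* *m diag_mx d *m P *m (P ^t* *m diag_mx d *m P)) +
   rc b *: (P ^t* *m diag_mx d *m P) + (rc c)%:M = P^t* *m diag_mx e *m P.
  rewrite -eE !mulmxDr !mulmxDl -!scalemxAr -!scalemxAl.
  rewrite mul_mx_scalar -scalemxAl PtP scalemx1.
  by rewrite !mulmxA mulmxtVK.
set yc := map_mx rc y.
have ycc : map_mx conjC (yc^T) = yc^T.
  by apply/matrixP => i j; rewrite !mxE; exact: conjc_real.
have E1 : yc^T *m P^t* = (P *m yc)^t*.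
  by rewrite trmx_mul map_mxM ycc.
rewrite !mulmxA E1 -(mulmxA _ P yc).
set z := P *m yc.
rewrite mul_mx_diag !mxE; apply: sumr_ge0 => k _; rewrite !mxE.
have [r [dr hr]] := dev k.
rewrite dr -!rmorphXn -!rmorphM -!rmorphD.
rewrite mulrAC; apply: mulr_ge0; last by rewrite ler0c.
by rewrite mulrC mul_conjC_ge0.
Qed.
End S.

Lemma fsum_big (n : nat) (g : nat -> R) : fsum n g = \sum_(i < n) g i.
Proof.
elim: n => [|n IH]; first by rewrite big_ord0.
by rewrite big_ord_recr /= IH.
Qed.

Lemma spec_nat (n : nat) (M : nat -> nat -> R) (a b c : R) :
  (forall i j, lt i n -> lt j n -> M i j = M j i) ->
  (forall lam, is_eigenvalue n M lam ->
      Rle 0 (Rplus (Rplus (Rmult a (Rmult lam lam)) (Rmult b lam)) c)) ->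
  forall y : nat -> R,
  Rle 0 (Rplus (Rplus
    (Rmult a (fsum n (fun i => Rmult (fsum n (fun j => Rmult (M i j) (y j)))
                                      (fsum n (fun j => Rmult (M i j) (y j))))))
    (Rmult b (fsum n (fun i => Rmult (y i) (fsum n (fun j => Rmult (M i j) (y j)))))))
    (Rmult c (fsum n (fun i => Rmult (y i) (y i))))).
Proof.
case: n => [|n] Msym Hev y.
  by rewrite /= !Rmult_0_r !Rplus_0_r; apply: Rle_refl.
pose Mm : 'M[R]_n.+1 := \matrix_(i, j) M i j.
pose ym : 'cV[R]_n.+1 := \col_i y i.
have MT : Mm^T = Mm.
  by apply/matrixP => i j; rewrite !mxE Msym //; apply/ssrnat.ltP.
have Hev' : forall lam (v : 'rV[R]_n.+1), v *m Mm = lam *: v -> v != 0 ->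
      0 <= a * lam ^+ 2 + b * lam + c.
  move=> lam v vM v0. apply/RleP. rewrite expr2; apply: Hev.
  exists (fun i => if (i < n.+1)%N then v 0 (inord i) else 0); split.
    case: (pickP (fun j => v 0 j != 0)) => [j vj|H].
      exists (val j); split; first by apply/ssrnat.ltP; exact: ltn_ord.
      have -> : inord (val j) = j :> 'I_n.+1 by apply: val_inj; rewrite /= inordK.
      by rewrite ltn_ord; apply/eqP.
    exfalso; move/eqP: v0; apply; apply/rowP => j.
    by move: (H j) => /negbFE/eqP ->; rewrite mxE.
  move=> i /ssrnat.ltP hi; rewrite hi fsum_big.
  have := congr1 (fun A : 'M[R]_(1, n.+1) => A 0 (inord i)) vM; rewrite !mxE => H.
  have H2 : \sum_(j < n.+1) v 0 j * Mm j (inord i) = Rmult lam (v 0 (inord i)) := H.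
  rewrite -H2.
  apply: eq_bigr => j _; rewrite ltn_ord.
  have -> : inord (val j) = j :> 'I_n.+1 by apply: val_inj; rewrite /= inordK.
  rewrite /Mm mxE (inordK hi) (Msym j i); last by apply/ssrnat.ltP.
    exact: mulrC.
  by apply/ssrnat.ltP.
have := @spec_quad _ n.+1 Mm a b c MT Hev' ym.
have E : ym^T *m (a *: (Mm *m Mm) + b *: Mm + c%:M) *m ym =
   a *: ((Mm *m ym)^T *m (Mm *m ym)) + b *: (ym^T *m (Mm *m ym))
   + c *: (ym^T *m ym).
  rewrite trmx_mul MT !mulmxDr !mulmxDl -!scalemxAr -!scalemxAl mul_mx_scalar.
  by rewrite !mulmxA -scalemxAl.
have eD (A B : 'M[R]_1) : (A + B) 0 0 = A 0 0 + B 0 0 by rewrite mxE.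
have eZ (x : R) (A : 'M[R]_1) : (x *: A) 0 0 = x * A 0 0 by rewrite mxE.
have eMy (i : 'I_n.+1) (k : 'I_1) : (Mm *m ym) i k = fsum n.+1 (fun j => M i j * y j).
  by rewrite mxE fsum_big; apply: eq_bigr => j _; rewrite !mxE.
have e1 : ((Mm *m ym)^T *m (Mm *m ym)) 0 0 =
   fsum n.+1 (fun i => fsum n.+1 (fun j => M i j * y j) * fsum n.+1 (fun j => M i j * y j)).
  by rewrite mxE fsum_big; apply: eq_bigr => i _; rewrite mxE !eMy.
have e2 : (ym^T *m (Mm *m ym)) 0 0 =
   fsum n.+1 (fun i => y i * fsum n.+1 (fun j => M i j * y j)).
  by rewrite mxE fsum_big; apply: eq_bigr => i _; rewrite eMy !mxE.
have e3 : (ym^T *m ym) 0 0 = fsum n.+1 (fun i => y i * y i).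
  by rewrite mxE fsum_big; apply: eq_bigr => i _; rewrite !mxE.
rewrite E !eD !eZ e1 e2 e3.
by move/RleP.
Qed.
End SpecM.

Open Scope R_scope.

Lemma fsum_ext n f g : (forall i, (i < n)%nat -> f i = g i) -> fsum n f = fsum n g.
Proof.
  induction n; intros H; simpl; auto.
  rewrite IHn by (intros; apply H; lia). rewrite (H n) by lia. reflexivity.
Qed.

Lemma fsum_plus n f g : fsum n (fun i => f i + g i) = fsum n f + fsum n g.
Proof. induction n; simpl; [lra| rewrite IHn; lra]. Qed.

Lemma fsum_minus n f g : fsum n (fun i => f i - g i) = fsum n f - fsum n g.
Proof. induction n; simpl; [lra| rewrite IHn; lra]. Qed.

Lemma fsum_scal n c f : fsum n (fun i => c * f i) = c * fsum n f.
Proof. induction n; simpl; [lra| rewrite IHn; lra]. Qed.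

Lemma fsum_scalr n c f : fsum n (fun i => f i * c) = fsum n f * c.
Proof. induction n; simpl; [lra| rewrite IHn; lra]. Qed.

Lemma fsum_zero n : fsum n (fun _ => 0) = 0.
Proof. induction n; simpl; [lra| rewrite IHn; lra]. Qed.

Lemma fsum_const n c : fsum n (fun _ => c) = INR n * c.
Proof. induction n; simpl fsum; [simpl; lra| rewrite IHn, S_INR; lra]. Qed.

Lemma fsum_nonneg n f : (forall i, (i < n)%nat -> 0 <= f i) -> 0 <= fsum n f.
Proof.
  induction n; intros H; simpl; [lra|].
  assert (0 <= fsum n f) by (apply IHn; intros; apply H; lia).
  assert (0 <= f n) by (apply H; lia). lra.
Qed.

Lemma fsum_le n f g : (forall i, (i < n)%nat -> f i <= g i) -> fsum n f <= fsum n g.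
Proof.
  intros H. assert (0 <= fsum n (fun i => g i - f i)).
  { apply fsum_nonneg. intros i Hi. specialize (H i Hi). lra. }
  rewrite fsum_minus in H0. lra.
Qed.

Lemma fsum_swap n m (f : nat -> nat -> R) :
  fsum n (fun i => fsum m (fun j => f i j)) = fsum m (fun j => fsum n (fun i => f i j)).
Proof.
  induction n; simpl.
  - symmetry. apply fsum_zero.
  - rewrite IHn. rewrite <- fsum_plus. reflexivity.
Qed.

Lemma fsum_zero_terms n f : (forall i, (i < n)%nat -> 0 <= f i) -> fsum n f = 0 ->
  forall i, (i < n)%nat -> f i = 0.
Proof.
  induction n; intros H Hs i Hi; [lia|].
  simpl in Hs.
  assert (0 <= fsum n f) by (apply fsum_nonneg; intros; apply H; lia).
  assert (0 <= f n) by (apply H; lia).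
  destruct (Nat.eq_dec i n) as [->|Hne]; [lra|].
  apply IHn; try lia; [intros; apply H; lia| lra].
Qed.

Lemma fsum_delta n i c : (i < n)%nat ->
  fsum n (fun j => if Nat.eqb i j then c j else 0) = c i.
Proof.
  induction n; intros Hi; [lia|]. simpl.
  destruct (Nat.eq_dec i n) as [->|Hne].
  - rewrite Nat.eqb_refl.
    rewrite (fsum_ext n _ (fun _ => 0)).
    + rewrite fsum_zero; lra.
    + intros j Hj. destruct (Nat.eqb_spec n j); [lia| reflexivity].
  - rewrite IHn by lia. destruct (Nat.eqb_spec i n); [lia| lra].
Qed.

Definition dn (n : nat) (y z : nat -> R) : R := fsum n (fun i => y i * z i).
Definition Mv (n : nat) (M : nat -> nat -> R) (y : nat -> R) : nat -> R :=
  fun i => fsum n (fun j => M i j * y j).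
Definition avgv (n : nat) (y : nat -> R) : R := / INR n * fsum n y.
Definition Kv (n : nat) (y : nat -> R) : nat -> R := fun i => y i - avgv n y.

Lemma dn_comm n y z : dn n y z = dn n z y.
Proof. unfold dn. apply fsum_ext; intros; ring. Qed.

Lemma dn_ext n y y' z z' : (forall i, (i < n)%nat -> y i = y' i) ->
  (forall i, (i < n)%nat -> z i = z' i) -> dn n y z = dn n y' z'.
Proof. intros H1 H2. unfold dn. apply fsum_ext; intros i Hi. rewrite H1, H2 by auto. ring. Qed.

Lemma dn_nonneg n y : 0 <= dn n y y.
Proof. unfold dn. apply fsum_nonneg. intros. nra. Qed.

Lemma dn_zero n y : dn n y y = 0 -> forall i, (i < n)%nat -> y i = 0.
Proof.
  intros H i Hi. assert (y i * y i = 0).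
  { apply (fsum_zero_terms n (fun i => y i * y i)); auto. intros; nra. }
  nra.
Qed.

Lemma Mv_mmul n A B y i : Mv n (mmul n A B) y i = Mv n A (Mv n B y) i.
Proof.
  unfold Mv, mmul.
  rewrite (fsum_ext n (fun j => fsum n (fun k => A i k * B k j) * y j)
                      (fun j => fsum n (fun k => A i k * B k j * y j))).
  2: { intros. rewrite <- fsum_scalr. reflexivity. }
  rewrite fsum_swap. apply fsum_ext; intros k Hk.
  rewrite <- fsum_scal. apply fsum_ext; intros; ring.
Qed.

Lemma Mv_ext n M y y' i : (forall j, (j < n)%nat -> y j = y' j) -> Mv n M y i = Mv n M y' i.
Proof. intros H. unfold Mv. apply fsum_ext; intros j Hj. rewrite H by auto. reflexivity. Qed.

Lemma dn_sym_form n M y z : (forall i j, (i < n)%nat -> (j < n)%nat -> M i j = M j i) ->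
  dn n y (Mv n M z) = dn n (Mv n M y) z.
Proof.
  intros Hs. unfold dn, Mv.
  rewrite (fsum_ext n (fun i => y i * fsum n (fun j => M i j * z j))
             (fun i => fsum n (fun j => y i * M i j * z j))).
  2: { intros. rewrite <- fsum_scal. apply fsum_ext; intros; ring. }
  rewrite fsum_swap. apply fsum_ext; intros j Hj.
  rewrite <- fsum_scalr. apply fsum_ext; intros i Hi. rewrite (Hs i j) by auto. ring.
Qed.

Lemma Kv_sym n y z : dn n y (Kv n z) = dn n (Kv n y) z.
Proof.
  unfold dn, Kv.
  rewrite (fsum_ext n _ (fun i => y i * z i - avgv n z * y i)) by (intros; ring).
  rewrite (fsum_ext n (fun i => (y i - avgv n y) * z i) (fun i => y i * z i - avgv n y * z i)) by (intros; ring).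
  rewrite !fsum_minus, !fsum_scal. unfold avgv. ring.
Qed.

Lemma Mv_lin n M c1 c2 y z i :
  Mv n M (fun j => c1 * y j + c2 * z j) i = c1 * Mv n M y i + c2 * Mv n M z i.
Proof.
  unfold Mv. rewrite <- !fsum_scal, <- fsum_plus. apply fsum_ext; intros; ring.
Qed.

Lemma dn_linr n y c1 c2 z w :
  dn n y (fun j => c1 * z j + c2 * w j) = c1 * dn n y z + c2 * dn n y w.
Proof. unfold dn. rewrite <- !fsum_scal, <- fsum_plus. apply fsum_ext; intros; ring. Qed.

Lemma dn_linl n y c1 c2 z w :
  dn n (fun j => c1 * z j + c2 * w j) y = c1 * dn n z y + c2 * dn n w y.
Proof. unfold dn. rewrite <- !fsum_scal, <- fsum_plus. apply fsum_ext; intros; ring. Qed.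

Lemma const_avg n u : (0 < n)%nat -> (forall i j, (i < n)%nat -> (j < n)%nat -> u i = u j) ->
  forall i, (i < n)%nat -> u i = avgv n u.
Proof.
  intros Hn H i Hi. unfold avgv.
  rewrite (fsum_ext n u (fun _ => u i)) by (intros; apply H; auto).
  rewrite fsum_const. field. apply not_0_INR. lia.
Qed.

Lemma avg_Kv n y : (0 < n)%nat -> avgv n (Kv n y) = 0.
Proof.
  intros Hn. unfold avgv, Kv. rewrite fsum_minus, fsum_const. unfold avgv.
  field. apply not_0_INR. lia.
Qed.

Lemma Kv_idem n y i : (0 < n)%nat -> Kv n (Kv n y) i = Kv n y i.
Proof. intros Hn. unfold Kv at 1. rewrite avg_Kv by auto. ring. Qed.

Lemma Kv_norm n y : (0 < n)%nat -> dn n (Kv n y) (Kv n y) <= dn n y y.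
Proof.
  intros Hn. unfold dn, Kv.
  set (m := avgv n y).
  assert (fsum n y = INR n * m).
  { unfold m, avgv. field. apply not_0_INR. lia. }
  rewrite (fsum_ext n (fun i => (y i - m) * (y i - m)) (fun i => y i * y i - (2 * m * y i - m * m)))
    by (intros; ring).
  rewrite fsum_minus, fsum_minus, fsum_scal, fsum_const, H.
  assert (0 <= INR n * (m * m)) by (apply Rmult_le_pos; [apply pos_INR| apply Rle_0_sqr]).
  nra.
Qed.

Lemma Kv_form_dn n y z : (0 < n)%nat -> dn n (Kv n y) z = dn n (Kv n y) (Kv n z).
Proof.
  intros Hn. rewrite Kv_sym. apply dn_ext; auto. intros i Hi. rewrite Kv_idem; auto.
Qed.

Lemma H_norm n y : INR n * (avgv n y * avgv n y) <= dn n y y.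
Proof.
  destruct n as [|n'].
  - simpl. unfold dn. simpl. lra.
  - set (m := avgv (S n') y).
    assert (Hs : fsum (S n') y = INR (S n') * m).
    { unfold m, avgv. field. apply not_0_INR. lia. }
    assert (0 <= fsum (S n') (fun i => (y i - m) * (y i - m)))
      by (apply fsum_nonneg; intros; apply Rle_0_sqr).
    rewrite (fsum_ext (S n') _ (fun i => y i * y i - (2 * m * y i - m * m))) in H
      by (intros; ring).
    rewrite fsum_minus, fsum_minus, fsum_scal, fsum_const, Hs in H.
    unfold dn. nra.
Qed.

Section Lap.
Variable n : nat.
Variable A : nat -> nat -> R.
Hypothesis HAsym : forall i j, A i j = A j i.
Hypothesis HAnn : forall i j, 0 <= A i j.
Hypothesis Hconn : connected n A.

Definition Bw (i k : nat) : R := if Nat.eqb k i then 0 else A i k.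
Let L := laplacian n A.

Lemma Bw_sym i j : Bw i j = Bw j i.
Proof. unfold Bw. rewrite Nat.eqb_sym. destruct (Nat.eqb i j); auto. Qed.

Lemma Bw_nn i j : 0 <= Bw i j.
Proof. unfold Bw. destruct (Nat.eqb j i); auto; lra. Qed.

Lemma L_sym i j : L i j = L j i.
Proof.
  unfold L, laplacian. rewrite Nat.eqb_sym.
  destruct (Nat.eqb_spec j i) as [->|]; auto. rewrite HAsym; auto.
Qed.

Lemma L_decomp i j : L i j = (if Nat.eqb i j then fsum n (Bw i) else 0) - Bw i j.
Proof.
  unfold L, laplacian, Bw. destruct (Nat.eqb_spec i j) as [->|Hne].
  - rewrite Nat.eqb_refl. unfold Bw. ring.
  - destruct (Nat.eqb_spec j i); [lia| ring].
Qed.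

Lemma Lv_form y i : (i < n)%nat ->
  Mv n L y i = fsum n (fun j => Bw i j * (y i - y j)).
Proof.
  intros Hi. unfold Mv.
  rewrite (fsum_ext n _ (fun j => (if Nat.eqb i j then fsum n (Bw i) * y j else 0) - Bw i j * y j)).
  2: { intros j _. rewrite L_decomp. destruct (Nat.eqb i j); ring. }
  rewrite fsum_minus, (fsum_delta n i (fun j => fsum n (Bw i) * y j)) by auto.
  rewrite (fsum_ext n (fun j => Bw i j * (y i - y j)) (fun j => Bw i j * y i - Bw i j * y j)) by (intros; ring).
  rewrite fsum_minus, fsum_scalr. reflexivity.
Qed.

Lemma L_const c i : (i < n)%nat -> Mv n L (fun _ => c) i = 0.
Proof.
  intros Hi. rewrite Lv_form by auto.
  rewrite (fsum_ext n _ (fun _ => 0)) by (intros; ring). apply fsum_zero.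
Qed.

Lemma L_symform y z : dn n y (Mv n L z) = dn n (Mv n L y) z.
Proof. apply dn_sym_form. intros; apply L_sym. Qed.

Lemma L_sum0 y : fsum n (Mv n L y) = 0.
Proof.
  transitivity (dn n (fun _ => 1) (Mv n L y)).
  { unfold dn. apply fsum_ext; intros; ring. }
  rewrite L_symform. unfold dn.
  rewrite (fsum_ext n _ (fun _ => 0)). apply fsum_zero.
  intros i Hi. rewrite L_const by auto. ring.
Qed.

Lemma L_quad y : dn n y (Mv n L y) =
  / 2 * fsum n (fun i => fsum n (fun j => Bw i j * ((y i - y j) * (y i - y j)))).
Proof.
  set (T := fsum n (fun i => fsum n (fun j => Bw i j * y i * (y i - y j)))).
  assert (H1 : dn n y (Mv n L y) = T).
  { unfold dn, T. apply fsum_ext; intros i Hi. rewrite Lv_form by auto.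
    rewrite <- fsum_scal. apply fsum_ext; intros; ring. }
  assert (H2 : T = fsum n (fun i => fsum n (fun j => Bw i j * y j * (y j - y i)))).
  { unfold T. rewrite fsum_swap. apply fsum_ext; intros i Hi. apply fsum_ext; intros j Hj.
    rewrite Bw_sym. ring. }
  assert (H3 : fsum n (fun i => fsum n (fun j => Bw i j * ((y i - y j) * (y i - y j)))) = T + T).
  { rewrite H2 at 2. unfold T. rewrite <- fsum_plus. apply fsum_ext; intros i Hi.
    rewrite <- fsum_plus. apply fsum_ext; intros; ring. }
  rewrite H1, H3. field.
Qed.

Lemma L_psd y : 0 <= dn n y (Mv n L y).
Proof.
  rewrite L_quad. apply Rmult_le_pos; [apply Rlt_le, Rinv_0_lt_compat; lra|].
  apply fsum_nonneg; intros i Hi. apply fsum_nonneg; intros j Hj.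
  apply Rmult_le_pos; [apply Bw_nn| apply Rle_0_sqr].
Qed.

Lemma L_kernel y : (forall i, (i < n)%nat -> Mv n L y i = 0) ->
  forall i j, (i < n)%nat -> (j < n)%nat -> y i = y j.
Proof.
  intros H0.
  assert (Hq : dn n y (Mv n L y) = 0).
  { unfold dn. rewrite (fsum_ext n _ (fun _ => 0)). apply fsum_zero.
    intros i Hi. rewrite H0 by auto. ring. }
  rewrite L_quad in Hq.
  assert (Hs : fsum n (fun i => fsum n (fun j => Bw i j * ((y i - y j) * (y i - y j)))) = 0) by lra.
  assert (Hterm : forall i j, (i < n)%nat -> (j < n)%nat -> Bw i j * ((y i - y j) * (y i - y j)) = 0).
  { intros i j Hi Hj.
    assert (Hi0 : fsum n (fun j => Bw i j * ((y i - y j) * (y i - y j))) = 0).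
    { apply (fsum_zero_terms n (fun i => fsum n (fun j => Bw i j * ((y i - y j) * (y i - y j))))); auto.
      intros k Hk. apply fsum_nonneg; intros m Hm. apply Rmult_le_pos; [apply Bw_nn| apply Rle_0_sqr]. }
    apply (fsum_zero_terms n (fun j => Bw i j * ((y i - y j) * (y i - y j)))); auto.
    intros m Hm. apply Rmult_le_pos; [apply Bw_nn| apply Rle_0_sqr]. }
  assert (Hreach : forall i k, reach n A i k -> (i < n)%nat -> (k < n)%nat /\ y k = y i).
  { intros i k Hr. induction Hr as [|j k Hr IH Hk Hpos]; intros Hi; auto.
    destruct (IH Hi) as [Hj Hyj]. split; auto.
    destruct (Nat.eq_dec j k) as [->|Hne]; auto.
    specialize (Hterm j k Hj Hk). unfold Bw in Hterm.
    destruct (Nat.eqb_spec k j); [lia|].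
    assert ((y j - y k) * (y j - y k) = 0).
    { apply (Rmult_eq_reg_l (A j k)); [|lra]. lra. }
    assert (y j - y k = 0) by nra. lra. }
  intros i j Hi Hj. destruct (Hreach i j (Hconn i j Hi Hj) Hi). auto.
Qed.

End Lap.

Definition ip (n p : nat) (z w : nat -> vec) : R :=
  fsum n (fun i => fsum p (fun l => z i l * w i l)).
Definition vadd (z w : nat -> vec) : nat -> vec := fun i l => z i l + w i l.
Definition vscal (c : R) (z : nat -> vec) : nat -> vec := fun i l => c * z i l.
Definition St (n : nat) (M : nat -> nat -> R) (z : nat -> vec) : nat -> vec :=
  fun i l => fsum n (fun j => M i j * z j l).
Definition Kst (n : nat) (z : nat -> vec) : nat -> vec := fun i l => z i l - avg n z l.
Definition slice (z : nat -> vec) (l : nat) : nat -> R := fun i => z i l.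

Section Stacked.
Variables n p : nat.

Lemma ip_comm z w : ip n p z w = ip n p w z.
Proof. unfold ip. apply fsum_ext; intros. apply fsum_ext; intros. ring. Qed.

Lemma ip_ext z z' w w' :
  (forall i l, (i < n)%nat -> (l < p)%nat -> z i l = z' i l) ->
  (forall i l, (i < n)%nat -> (l < p)%nat -> w i l = w' i l) ->
  ip n p z w = ip n p z' w'.
Proof.
  intros H1 H2. unfold ip. apply fsum_ext; intros i Hi. apply fsum_ext; intros l Hl.
  rewrite H1, H2 by auto. reflexivity.
Qed.

Lemma ip_addl z z' w : ip n p (vadd z z') w = ip n p z w + ip n p z' w.
Proof.
  unfold ip, vadd. rewrite <- fsum_plus. apply fsum_ext; intros.
  rewrite <- fsum_plus. apply fsum_ext; intros. ring.
Qed.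
Lemma ip_addr z z' w : ip n p w (vadd z z') = ip n p w z + ip n p w z'.
Proof. rewrite ip_comm, ip_addl, (ip_comm z), (ip_comm z'). reflexivity. Qed.
Lemma ip_scall c z w : ip n p (vscal c z) w = c * ip n p z w.
Proof.
  unfold ip, vscal. rewrite <- fsum_scal. apply fsum_ext; intros.
  rewrite <- fsum_scal. apply fsum_ext; intros. ring.
Qed.
Lemma ip_scalr c z w : ip n p w (vscal c z) = c * ip n p w z.
Proof. rewrite ip_comm, ip_scall, ip_comm. reflexivity. Qed.

Lemma ip_nonneg z : 0 <= ip n p z z.
Proof. unfold ip. apply fsum_nonneg; intros. apply fsum_nonneg; intros. apply Rle_0_sqr. Qed.

Lemma ip_slices z w : ip n p z w = fsum p (fun l => dn n (slice z l) (slice w l)).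
Proof. unfold ip, dn, slice. apply fsum_swap. Qed.

Lemma St_add M z w : St n M (vadd z w) = vadd (St n M z) (St n M w).
Proof.
  unfold St, vadd. apply functional_extensionality; intros i.
  apply functional_extensionality; intros l. rewrite <- fsum_plus. apply fsum_ext; intros; ring.
Qed.
Lemma St_scal M c z : St n M (vscal c z) = vscal c (St n M z).
Proof.
  unfold St, vscal. apply functional_extensionality; intros i.
  apply functional_extensionality; intros l. rewrite <- fsum_scal. apply fsum_ext; intros; ring.
Qed.

Lemma St_ext M z z' : (forall i l, (i < n)%nat -> (l < p)%nat -> z i l = z' i l) ->
  forall i l, (l < p)%nat -> St n M z i l = St n M z' i l.
Proof. intros H i l Hl. unfold St. apply fsum_ext; intros. rewrite H; auto. Qed.

Lemma avg_ext z z' l : (forall i, (i < n)%nat -> z i l = z' i l) -> avg n z l = avg n z' l.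
Proof. intros H. unfold avg. rewrite (fsum_ext n _ (fun i => z' i l)); auto. Qed.

Lemma Kst_ext z z' : (forall i l, (i < n)%nat -> (l < p)%nat -> z i l = z' i l) ->
  forall i l, (i < n)%nat -> (l < p)%nat -> Kst n z i l = Kst n z' i l.
Proof.
  intros H i l Hi Hl. unfold Kst. rewrite H by auto.
  rewrite (avg_ext z z' l); auto.
Qed.

Lemma avg_lin c1 c2 z w l :
  avg n (fun i l => c1 * z i l + c2 * w i l) l = c1 * avg n z l + c2 * avg n w l.
Proof.
  unfold avg. rewrite fsum_plus, fsum_scal, fsum_scal. ring.
Qed.

Lemma Kst_lin c1 c2 z w i l :
  Kst n (fun i l => c1 * z i l + c2 * w i l) i l = c1 * Kst n z i l + c2 * Kst n w i l.
Proof. unfold Kst. rewrite avg_lin. ring. Qed.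

End Stacked.

Definition spec_prop : Prop :=
  forall (n : nat) (M : nat -> nat -> R) (a b c : R),
  (forall i j, (i < n)%nat -> (j < n)%nat -> M i j = M j i) ->
  (forall lam, is_eigenvalue n M lam -> 0 <= a * (lam * lam) + b * lam + c) ->
  forall y : nat -> R,
  0 <= a * fsum n (fun i => fsum n (fun j => M i j * y j) * fsum n (fun j => M i j * y j))
     + b * fsum n (fun i => y i * fsum n (fun j => M i j * y j))
     + c * fsum n (fun i => y i * y i).

Section Qf.
Variable n : nat.
Variable A : nat -> nat -> R.
Hypothesis HAsym : forall i j, A i j = A j i.
Hypothesis HAnn : forall i j, 0 <= A i j.
Hypothesis Hconn : connected n A.
Variables rho rho2 : R.
Hypothesis Hrho : largest_eigenvalue n (laplacian n A) rho.
Hypothesis Hrho2 : smallest_pos_eigenvalue n (laplacian n A) rho2.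
Variable Q : nat -> nat -> R.
Hypothesis HQ : mp_pinv n (laplacian n A) Q.
Hypothesis Hspec : spec_prop.

Local Notation L := (laplacian n A).

Lemma n_pos : (0 < n)%nat.
Proof. destruct Hrho2 as [[v [[i [Hi _]] _]] _]. lia. Qed.

Lemma rho2_pos : 0 < rho2.
Proof. destruct Hrho2 as [_ [H _]]. auto. Qed.

Lemma eig_nonneg lam : is_eigenvalue n L lam -> 0 <= lam.
Proof.
  intros [v [[i [Hi Hv]] Hev]].
  assert (Hd : dn n v (Mv n L v) = lam * dn n v v).
  { unfold dn. rewrite <- fsum_scal. apply fsum_ext; intros j Hj.
    unfold Mv. rewrite Hev by auto. ring. }
  assert (Hpos : 0 < dn n v v).
  { destruct (Rle_lt_or_eq_dec 0 (dn n v v) (dn_nonneg n v)) as [H|H]; auto.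
    exfalso. apply Hv. apply (dn_zero n v); auto. }
  pose proof (L_psd n A HAsym HAnn v). nra.
Qed.

Lemma rho_ge_rho2 : rho2 <= rho.
Proof. destruct Hrho as [_ H]. apply H. destruct Hrho2 as [H2 _]. auto. Qed.

Lemma sp1 y : dn n (Mv n L y) (Mv n L y) <= rho * rho * dn n y y.
Proof.
  pose proof (Hspec n L (-1) 0 (rho * rho)) as H.
  assert (H0 : 0 <= -1 * fsum n (fun i => fsum n (fun j => L i j * y j) * fsum n (fun j => L i j * y j))
     + 0 * fsum n (fun i => y i * fsum n (fun j => L i j * y j))
     + rho * rho * fsum n (fun i => y i * y i)).
  { apply H. intros; apply L_sym; auto.
    intros lam Hl. pose proof (eig_nonneg lam Hl). destruct Hrho as [_ Hm].
    pose proof (Hm lam Hl). nra. }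
  unfold dn, Mv. lra.
Qed.

Lemma sp2 y : rho2 * dn n y (Mv n L y) <= dn n (Mv n L y) (Mv n L y).
Proof.
  pose proof (Hspec n L 1 (- rho2) 0) as H.
  assert (H0 : 0 <= 1 * fsum n (fun i => fsum n (fun j => L i j * y j) * fsum n (fun j => L i j * y j))
     + - rho2 * fsum n (fun i => y i * fsum n (fun j => L i j * y j))
     + 0 * fsum n (fun i => y i * y i)).
  { apply H. intros; apply L_sym; auto.
    intros lam Hl. pose proof (eig_nonneg lam Hl).
    destruct Hrho2 as [_ [_ Hm]].
    destruct (Rle_lt_or_eq_dec 0 lam H0) as [Hp|Hz].
    - pose proof (Hm lam Hl Hp). nra.
    - subst. nra. }
  unfold dn, Mv. lra.
Qed.

Lemma sp3 y : dn n y (Mv n L y) <= rho * dn n y y.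
Proof.
  pose proof (Hspec n L 0 (-1) rho) as H.
  assert (H0 : 0 <= 0 * fsum n (fun i => fsum n (fun j => L i j * y j) * fsum n (fun j => L i j * y j))
     + -1 * fsum n (fun i => y i * fsum n (fun j => L i j * y j))
     + rho * fsum n (fun i => y i * y i)).
  { apply H. intros; apply L_sym; auto.
    intros lam Hl. destruct Hrho as [_ Hm]. pose proof (Hm lam Hl). nra. }
  unfold dn, Mv. lra.
Qed.

Lemma P1v y i : (i < n)%nat -> Mv n L (Mv n Q (Mv n L y)) i = Mv n L y i.
Proof.
  intros Hi. destruct HQ as [P1 _].
  rewrite <- Mv_mmul, <- Mv_mmul. unfold Mv. apply fsum_ext; intros j Hj.
  rewrite P1 by auto. reflexivity.
Qed.

Lemma P2v y i : (i < n)%nat -> Mv n Q (Mv n L (Mv n Q y)) i = Mv n Q y i.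
Proof.
  intros Hi. destruct HQ as [_ [P2 _]].
  rewrite <- Mv_mmul, <- Mv_mmul. unfold Mv. apply fsum_ext; intros j Hj.
  rewrite P2 by auto. reflexivity.
Qed.

Lemma P3v y z : dn n z (Mv n L (Mv n Q y)) = dn n (Mv n L (Mv n Q z)) y.
Proof.
  destruct HQ as [_ [_ [P3 _]]].
  transitivity (dn n z (Mv n (mmul n L Q) y)).
  { apply dn_ext; auto. intros; rewrite Mv_mmul; auto. }
  rewrite dn_sym_form by auto. apply dn_ext; auto. intros; rewrite Mv_mmul; auto.
Qed.

Lemma P4v y z : dn n z (Mv n Q (Mv n L y)) = dn n (Mv n Q (Mv n L z)) y.
Proof.
  destruct HQ as [_ [_ [_ P4]]].
  transitivity (dn n z (Mv n (mmul n Q L) y)).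
  { apply dn_ext; auto. intros; rewrite Mv_mmul; auto. }
  rewrite dn_sym_form by auto. apply dn_ext; auto. intros; rewrite Mv_mmul; auto.
Qed.

Lemma Lsymf y z : dn n y (Mv n L z) = dn n (Mv n L y) z.
Proof. apply L_symform; auto. Qed.

Lemma LQ_K y i : (i < n)%nat -> Mv n L (Mv n Q y) i = Kv n y i.
Proof.
  intros Hi.
  set (u := fun j => y j - Mv n L (Mv n Q y) j).
  assert (Hw : forall w, dn n w (Mv n L u) = 0).
  { intros w. rewrite Lsymf.
    unfold u. unfold dn. rewrite (fsum_ext n _ (fun j => Mv n L w j * y j - Mv n L w j * Mv n L (Mv n Q y) j))
      by (intros; ring).
    rewrite fsum_minus. fold (dn n (Mv n L w) y). fold (dn n (Mv n L w) (Mv n L (Mv n Q y))).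
    rewrite P3v. rewrite (dn_ext n (Mv n L (Mv n Q (Mv n L w))) (Mv n L w) y y); [ring| |auto].
    intros; apply P1v; auto. }
  assert (HLu : forall j, (j < n)%nat -> Mv n L u j = 0).
  { apply dn_zero. apply Hw. }
  pose proof (L_kernel n A HAsym HAnn Hconn u HLu) as Hk.
  pose proof (const_avg n u n_pos Hk i Hi) as Hc.
  assert (Hav : avgv n u = avgv n y).
  { assert (E : fsum n (Mv n L (Mv n Q y)) = 0) by exact (L_sum0 n A HAsym (Mv n Q y)).
    unfold avgv, u. rewrite fsum_minus, E. ring. }
  unfold Kv. rewrite <- Hav, <- Hc. unfold u. ring.
Qed.

Lemma QL_K y i : (i < n)%nat -> Mv n Q (Mv n L y) i = Kv n y i.
Proof.
  intros Hi.
  set (u := fun j => y j - Mv n Q (Mv n L y) j).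
  assert (HLu : forall j, (j < n)%nat -> Mv n L u j = 0).
  { intros j Hj. unfold u.
    rewrite (Mv_ext n L _ (fun k => 1 * y k + (-1) * Mv n Q (Mv n L y) k)) by (intros; ring).
    rewrite Mv_lin, P1v by auto. ring. }
  pose proof (L_kernel n A HAsym HAnn Hconn u HLu) as Hk.
  pose proof (const_avg n u n_pos Hk i Hi) as Hc.
  assert (H0 : fsum n (Mv n Q (Mv n L y)) = 0).
  { transitivity (dn n (fun _ => 1) (Mv n Q (Mv n L y))).
    { unfold dn. apply fsum_ext; intros; ring. }
    rewrite P4v. unfold dn. rewrite (fsum_ext n _ (fun _ => 0)). apply fsum_zero.
    intros j Hj. rewrite (Mv_ext n Q _ (fun _ => 0)).
    - unfold Mv. rewrite (fsum_ext n _ (fun _ => 0)) by (intros; ring). rewrite fsum_zero. ring.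
    - intros k Hk'. apply L_const; auto. }
  assert (Hav : avgv n u = avgv n y).
  { assert (E : fsum n (Mv n Q (Mv n L y)) = 0) by exact H0.
    unfold avgv, u. rewrite fsum_minus, E. ring. }
  unfold Kv. rewrite <- Hav, <- Hc. unfold u. ring.
Qed.

Lemma Q_K y i : (i < n)%nat -> Mv n Q (Kv n y) i = Mv n Q y i.
Proof.
  intros Hi. transitivity (Mv n Q (Mv n L (Mv n Q y)) i).
  - apply Mv_ext; intros j Hj; rewrite LQ_K; auto.
  - apply P2v; auto.
Qed.

Lemma K_Q y i : (i < n)%nat -> Kv n (Mv n Q y) i = Mv n Q y i.
Proof. intros Hi. rewrite <- QL_K, P2v; auto. Qed.

Lemma K_L y i : (i < n)%nat -> Kv n (Mv n L y) i = Mv n L y i.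
Proof.
  intros Hi. unfold Kv, avgv.
  assert (E : fsum n (Mv n L y) = 0) by exact (L_sum0 n A HAsym y).
  rewrite E. ring.
Qed.

Lemma L_K y i : (i < n)%nat -> Mv n L (Kv n y) i = Mv n L y i.
Proof.
  intros Hi. unfold Kv.
  rewrite (Mv_ext n L _ (fun k => 1 * y k + (- avgv n y) * (fun _ => 1) k)) by (intros; ring).
  rewrite Mv_lin. rewrite L_const by auto. ring.
Qed.

Lemma Qsymf y z : dn n z (Mv n Q y) = dn n (Mv n Q z) y.
Proof.
  rewrite (dn_ext n z z (Mv n Q y) (Kv n (Mv n Q y))); auto.
  2: { intros; rewrite K_Q; auto. }
  rewrite Kv_sym.
  rewrite (dn_ext n (Kv n z) (Mv n L (Mv n Q z)) (Mv n Q y) (Mv n Q y)); auto.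
  2: { intros; rewrite LQ_K; auto. }
  rewrite <- Lsymf.
  rewrite (dn_ext n (Mv n Q z) (Mv n Q z) (Mv n L (Mv n Q y)) (Kv n y)); auto.
  2: { intros; rewrite LQ_K; auto. }
  rewrite Kv_sym. apply dn_ext; auto. intros; rewrite K_Q; auto.
Qed.

Lemma q_form y : dn n y (Mv n Q y) = dn n (Mv n Q y) (Mv n L (Mv n Q y)).
Proof.
  rewrite (dn_ext n y y (Mv n Q y) (Kv n (Mv n Q y))); auto.
  2: { intros; rewrite K_Q; auto. }
  rewrite Kv_sym. rewrite dn_comm. apply dn_ext; auto.
  intros; rewrite LQ_K; auto.
Qed.

Lemma q_nonneg y : 0 <= dn n y (Mv n Q y).
Proof. rewrite q_form. apply L_psd; auto. Qed.

Lemma q_bound y : rho2 * dn n y (Mv n Q y) <= dn n (Kv n y) (Kv n y).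
Proof.
  rewrite q_form. pose proof (sp2 (Mv n Q y)).
  rewrite (dn_ext n (Mv n L (Mv n Q y)) (Kv n y) (Mv n L (Mv n Q y)) (Kv n y)) in H; auto;
   intros; rewrite LQ_K; auto.
Qed.

Lemma F5 y : rho2 * dn n (Kv n y) (Kv n y) <= dn n y (Mv n L y).
Proof.
  set (s := Kv n y). set (u := Mv n Q y).
  assert (HS : dn n y (Mv n L y) = dn n s (Mv n L s)).
  { unfold s. rewrite (dn_ext n y y (Mv n L y) (Kv n (Mv n L y))); auto.
    2: { intros; rewrite K_L; auto. }
    rewrite Kv_sym. apply dn_ext; auto. intros; rewrite L_K; auto. }
  assert (HLu : forall i, (i < n)%nat -> Mv n L u i = s i) by (intros; unfold u, s; apply LQ_K; auto).
  assert (HN : dn n s (Mv n L u) = dn n s s) by (apply dn_ext; auto).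
  assert (HU : rho2 * dn n u (Mv n L u) <= dn n s s).
  { pose proof (q_bound y). rewrite q_form in H. auto. }
  pose proof (L_psd n A HAsym HAnn (fun i => 1 * s i + (- rho2) * u i)) as Hp.
  rewrite (dn_ext n (fun i => 1 * s i + - rho2 * u i) (fun i => 1 * s i + - rho2 * u i) (Mv n L (fun i => 1 * s i + - rho2 * u i))
                       (fun i => 1 * Mv n L s i + (- rho2) * Mv n L u i)) in Hp; auto.
  2: { intros; apply Mv_lin. }
  rewrite dn_linl, !dn_linr in Hp.
  rewrite (Lsymf u s) in Hp.
  pose proof rho2_pos.
  assert (rho2 * rho2 * dn n u (Mv n L u) <= rho2 * dn n s s).
  { replace (rho2 * rho2 * dn n u (Mv n L u)) with (rho2 * (rho2 * dn n u (Mv n L u))) by ring.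
    apply Rmult_le_compat_l; lra. }
  rewrite (dn_comm n (Mv n L u) s), HN in Hp. rewrite HS. lra.
Qed.


Variable p : nat.

Lemma StL_sym z w : ip n p z (St n L w) = ip n p (St n L z) w.
Proof.
  rewrite !ip_slices. apply fsum_ext; intros l Hl.
  exact (Lsymf (slice z l) (slice w l)).
Qed.

Lemma StQ_sym z w : ip n p z (St n Q w) = ip n p (St n Q z) w.
Proof.
  rewrite !ip_slices. apply fsum_ext; intros l Hl.
  exact (Qsymf (slice w l) (slice z l)).
Qed.

Lemma Kst_sym z w : ip n p z (Kst n w) = ip n p (Kst n z) w.
Proof.
  rewrite !ip_slices. apply fsum_ext; intros l Hl.
  exact (Kv_sym n (slice z l) (slice w l)).
Qed.

Lemma QLs z i l : (i < n)%nat -> St n Q (St n L z) i l = Kst n z i l.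
Proof. intros Hi. exact (QL_K (slice z l) i Hi). Qed.
Lemma LQs z i l : (i < n)%nat -> St n L (St n Q z) i l = Kst n z i l.
Proof. intros Hi. exact (LQ_K (slice z l) i Hi). Qed.
Lemma QKs z i l : (i < n)%nat -> St n Q (Kst n z) i l = St n Q z i l.
Proof. intros Hi. exact (Q_K (slice z l) i Hi). Qed.
Lemma KQs z i l : (i < n)%nat -> Kst n (St n Q z) i l = St n Q z i l.
Proof. intros Hi. exact (K_Q (slice z l) i Hi). Qed.
Lemma KLs z i l : (i < n)%nat -> Kst n (St n L z) i l = St n L z i l.
Proof. intros Hi. exact (K_L (slice z l) i Hi). Qed.
Lemma LKs z i l : (i < n)%nat -> St n L (Kst n z) i l = St n L z i l.
Proof. intros Hi. exact (L_K (slice z l) i Hi). Qed.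
Lemma KKs z i l : (i < n)%nat -> Kst n (Kst n z) i l = Kst n z i l.
Proof. intros Hi. exact (Kv_idem n (slice z l) i n_pos). Qed.

Lemma q_nn z : 0 <= ip n p z (St n Q z).
Proof.
  rewrite ip_slices. apply fsum_nonneg; intros l Hl. exact (q_nonneg (slice z l)).
Qed.

Lemma q_bd z : rho2 * ip n p z (St n Q z) <= ip n p (Kst n z) (Kst n z).
Proof.
  rewrite !ip_slices, <- fsum_scal. apply fsum_le; intros l Hl. exact (q_bound (slice z l)).
Qed.

Lemma F5s z : rho2 * ip n p (Kst n z) (Kst n z) <= ip n p z (St n L z).
Proof.
  rewrite !ip_slices, <- fsum_scal. apply fsum_le; intros l Hl. exact (F5 (slice z l)).
Qed.

Lemma sp1s z : ip n p (St n L z) (St n L z) <= rho * rho * ip n p z z.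
Proof.
  rewrite !ip_slices, <- fsum_scal. apply fsum_le; intros l Hl. exact (sp1 (slice z l)).
Qed.

Lemma sp3s z : ip n p z (St n L z) <= rho * ip n p z z.
Proof.
  rewrite !ip_slices, <- fsum_scal. apply fsum_le; intros l Hl. exact (sp3 (slice z l)).
Qed.

Lemma Knorms z : ip n p (Kst n z) (Kst n z) <= ip n p z z.
Proof.
  rewrite !ip_slices. apply fsum_le; intros l Hl. exact (Kv_norm n (slice z l) n_pos).
Qed.

End Qf.

Lemma sqn_nonneg p u : 0 <= sqn p u.
Proof. unfold sqn, dot. apply fsum_nonneg; intros. apply Rle_0_sqr. Qed.

Lemma norm_sq p u : norm p u * norm p u = sqn p u.
Proof. unfold norm. apply sqrt_sqrt, sqn_nonneg. Qed.

Lemma norm_nonneg p u : 0 <= norm p u.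
Proof. unfold norm. apply sqrt_pos. Qed.

Lemma dot_comm p u w : dot p u w = dot p w u.
Proof. unfold dot. apply fsum_ext; intros; ring. Qed.

Lemma CS2 p u w : dot p u w * dot p u w <= sqn p u * sqn p w.
Proof.
  destruct (Rle_lt_or_eq_dec 0 (sqn p w) (sqn_nonneg p w)) as [Hp|Hz].
  - set (t := dot p u w / sqn p w).
    assert (H : 0 <= sqn p (fun l => u l - t * w l)) by apply sqn_nonneg.
    unfold sqn, dot in H.
    rewrite (fsum_ext p _ (fun l => u l * u l - (2 * t * (u l * w l) - t * t * (w l * w l)))) in H
      by (intros; ring).
    rewrite fsum_minus, fsum_minus, fsum_scal, fsum_scal in H.
    fold (dot p u u) (dot p u w) (dot p w w) in H. fold (sqn p u) (sqn p w) in H.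
    unfold t in H.
    assert (E : dot p u w * dot p u w = sqn p w * (2 * (dot p u w / sqn p w) * dot p u w -
      dot p u w / sqn p w * (dot p u w / sqn p w) * sqn p w)) by (field; lra).
    rewrite E, (Rmult_comm (sqn p u)). apply Rmult_le_compat_l; lra.
  - assert (Hw : forall l, (l < p)%nat -> w l = 0).
    { intros l Hl. assert (w l * w l = 0).
      { apply (fsum_zero_terms p (fun l => w l * w l)); auto. intros; apply Rle_0_sqr. }
      nra. }
    assert (dot p u w = 0).
    { unfold dot. rewrite (fsum_ext p _ (fun _ => 0)). apply fsum_zero.
      intros l Hl. rewrite Hw by auto. ring. }
    rewrite H, <- Hz. lra.
Qed.

Lemma CS p u w : dot p u w <= norm p u * norm p w.
Proof.
  pose proof (CS2 p u w).
  pose proof (norm_sq p u). pose proof (norm_sq p w).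
  pose proof (norm_nonneg p u). pose proof (norm_nonneg p w).
  assert (Hprod : 0 <= norm p u * norm p w) by (apply Rmult_le_pos; auto).
  destruct (Rle_dec (dot p u w) 0); [lra|].
  apply Rsqr_incr_0; unfold Rsqr; [|lra|auto]. nra.
Qed.

Lemma sqn_ext p u w : (forall l, (l < p)%nat -> u l = w l) -> sqn p u = sqn p w.
Proof. intros H. unfold sqn, dot. apply fsum_ext; intros. rewrite H; auto. Qed.

Lemma sqn_scal p c u : sqn p (fun l => c * u l) = c * c * sqn p u.
Proof. unfold sqn, dot. rewrite <- fsum_scal. apply fsum_ext; intros; ring. Qed.

Lemma norm_scal p c u : norm p (fun l => c * u l) = Rabs c * norm p u.
Proof.
  unfold norm. rewrite sqn_scal. rewrite sqrt_mult_alt by (apply Rle_0_sqr).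
  rewrite <- sqrt_Rsqr_abs. reflexivity.
Qed.

Lemma lip_sq p (gx gy x y : vec) Lf :
  norm p (vsub gx gy) <= Lf * norm p (vsub x y) ->
  sqn p (vsub gx gy) <= Lf * Lf * sqn p (vsub x y).
Proof.
  intros H. rewrite <- !norm_sq. pose proof (norm_nonneg p (vsub gx gy)). nra.
Qed.

Section Descent.
Variable p : nat.
Variable F : vec -> R.
Variable Gf : vec -> vec.
Variable Lf : R.
Hypothesis Hgrad : forall x, is_grad p F (Gf x) x.
Hypothesis Hlip : forall x y, norm p (vsub (Gf x) (Gf y)) <= Lf * norm p (vsub x y).

Lemma phi_deriv (x d : vec) t :
  derivable_pt_lim (fun t => F (fun l => x l + t * d l)) t (dot p (Gf (fun l => x l + t * d l)) d).
Proof.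
  intros eps Heps.
  set (z := fun l => x l + t * d l).
  set (nd := norm p d).
  assert (Hnd : 0 <= nd) by apply norm_nonneg.
  assert (Heps' : 0 < eps / (2 * (nd + 1))).
  { apply Rdiv_lt_0_compat; lra. }
  destruct (Hgrad z (eps / (2 * (nd + 1))) Heps') as [delta [Hdelta Hd]].
  assert (Hdel' : 0 < delta / (nd + 1)) by (apply Rdiv_lt_0_compat; lra).
  exists (mkposreal _ Hdel'). intros h Hh0 Hh. simpl in Hh.
  set (y := fun l => x l + (t + h) * d l).
  assert (Hv : norm p (vsub y z) = Rabs h * nd).
  { unfold nd. rewrite <- norm_scal. unfold norm. f_equal. apply sqn_ext.
    intros l _. unfold vsub, y, z. ring. }
  assert (Hdot : dot p (Gf z) (vsub y z) = h * dot p (Gf z) d).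
  { unfold dot. rewrite <- fsum_scal. apply fsum_ext; intros. unfold vsub, y, z. ring. }
  assert (Hlt : norm p (vsub y z) < delta).
  { rewrite Hv. apply Rle_lt_trans with (Rabs h * (nd + 1)).
    - apply Rmult_le_compat_l; [apply Rabs_pos| lra].
    - apply (Rmult_lt_reg_r (/ (nd + 1))). apply Rinv_0_lt_compat; lra.
      replace (Rabs h * (nd + 1) * / (nd + 1)) with (Rabs h) by (field; lra).
      exact Hh. }
  specialize (Hd y Hlt). rewrite Hdot, Hv in Hd.
  assert (Hah : 0 < Rabs h) by (apply Rabs_pos_lt; auto).
  replace ((F y - F z) / h - dot p (Gf z) d) with ((F y - F z - h * dot p (Gf z) d) / h)
    by (field; auto).
  unfold Rdiv at 1. rewrite Rabs_mult, Rabs_inv.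
  apply Rle_lt_trans with (eps / (2 * (nd + 1)) * (Rabs h * nd) * / Rabs h).
  - apply Rmult_le_compat_r; [left; apply Rinv_0_lt_compat; auto| exact Hd].
  - replace (eps / (2 * (nd + 1)) * (Rabs h * nd) * / Rabs h) with (eps * (nd / (2 * (nd + 1))))
      by (field; lra).
    assert (nd / (2 * (nd + 1)) < 1).
    { apply (Rmult_lt_reg_r (2 * (nd + 1))); [lra|].
      replace (nd / (2 * (nd + 1)) * (2 * (nd + 1))) with nd by (field; lra). lra. }
    assert (0 <= nd / (2 * (nd + 1))) by (apply Rmult_le_pos; [lra| left; apply Rinv_0_lt_compat; lra]).
    nra.
Qed.

Lemma descent x y :
  F y <= F x + dot p (Gf x) (vsub y x) + Lf / 2 * sqn p (vsub y x).
Proof.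
  set (d := vsub y x).
  set (c1 := dot p (Gf x) d). set (c2 := Lf / 2 * sqn p d).
  set (psi := fun t => F (fun l => x l + t * d l) - c1 * t - c2 * (t * t)).
  set (psi' := fun t => dot p (Gf (fun l => x l + t * d l)) d - c1 - c2 * (2 * t)).
  assert (Hder : forall t, derivable_pt_lim psi t (psi' t)).
  { intros t. unfold psi, psi'.
    apply derivable_pt_lim_minus.
    - apply derivable_pt_lim_minus.
      + apply phi_deriv.
      + replace c1 with (c1 * 1) at 2 by ring.
        apply derivable_pt_lim_scal. apply derivable_pt_lim_id.
    - apply derivable_pt_lim_scal.
      replace (2 * t) with (1 * t + t * 1) by ring.
      apply (derivable_pt_lim_mult id id); apply derivable_pt_lim_id. }
  destruct (MVT_cor2 psi psi' 0 1 Rlt_0_1 (fun c _ => Hder c)) as [c [Hc [Hc0 Hc1]]].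
  assert (Hpsi' : psi' c <= 0).
  { unfold psi', c1, c2.
    set (zc := fun l => x l + c * d l).
    assert (E1 : dot p (Gf zc) d - dot p (Gf x) d = dot p (vsub (Gf zc) (Gf x)) d).
    { unfold dot. rewrite <- fsum_minus. apply fsum_ext; intros. unfold vsub. ring. }
    pose proof (CS p (vsub (Gf zc) (Gf x)) d).
    pose proof (Hlip zc x).
    assert (E2 : norm p (vsub zc x) = c * norm p d).
    { rewrite <- (Rabs_pos_eq c) by lra. rewrite <- norm_scal. unfold norm. f_equal.
      apply sqn_ext. intros; unfold vsub, zc. ring. }
    rewrite E2 in H0. pose proof (norm_nonneg p d). pose proof (norm_sq p d).
    pose proof (norm_nonneg p (vsub (Gf zc) (Gf x))).
    assert (norm p (vsub (Gf zc) (Gf x)) * norm p d <= Lf * (c * norm p d) * norm p d)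
      by (apply Rmult_le_compat_r; auto).
    nra. }
  assert (Hy : (fun l => x l + 1 * d l) = y).
  { apply functional_extensionality; intros l. unfold d, vsub. ring. }
  assert (Hx : (fun l => x l + 0 * d l) = x).
  { apply functional_extensionality; intros l. ring. }
  unfold psi in Hc. rewrite Hy, Hx in Hc.
  assert (psi' c * (1 - 0) <= 0) by lra.
  lra.
Qed.
End Descent.

Lemma St_Kmat n (z : nat -> vec) i l : (i < n)%nat -> St n (Kmat n) z i l = Kst n z i l.
Proof.
  intros Hi. unfold St, Kmat, Kst, avg.
  rewrite (fsum_ext n _ (fun j => (if Nat.eqb i j then z j l else 0) - / INR n * z j l)).
  2: { intros j _. destruct (Nat.eqb i j); ring. }
  rewrite fsum_minus, fsum_delta, fsum_scal by auto. reflexivity.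
Qed.

Lemma bil_St n p M z w : bil n p M z w = ip n p z (St n M w).
Proof.
  unfold bil, ip, St, dot. apply fsum_ext; intros i Hi.
  rewrite (fsum_ext n _ (fun j => fsum p (fun l => M i j * z i l * w j l))).
  2: { intros. rewrite <- fsum_scal. apply fsum_ext; intros; ring. }
  rewrite fsum_swap. apply fsum_ext; intros l Hl.
  rewrite <- fsum_scal. apply fsum_ext; intros; ring.
Qed.

Section Young.
Variables n p : nat.
Lemma ip_sub_nonneg z w : 0 <= ip n p z z - 2 * ip n p z w + ip n p w w.
Proof.
  pose proof (ip_nonneg n p (vadd z (vscal (-1) w))).
  rewrite !ip_addl, !ip_addr, !ip_scall, !ip_scalr in H.
  rewrite (ip_comm n p w z) in H. lra.
Qed.
Lemma young2v u1 u2 : ip n p (vadd u1 u2) (vadd u1 u2) <= 2 * (ip n p u1 u1 + ip n p u2 u2).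
Proof.
  rewrite !ip_addl, !ip_addr. rewrite (ip_comm n p u2 u1).
  pose proof (ip_sub_nonneg u1 u2). lra.
Qed.
Lemma young4 u1 u2 u3 u4 :
  ip n p (vadd u1 (vadd u2 (vadd u3 u4))) (vadd u1 (vadd u2 (vadd u3 u4)))
  <= 4 * (ip n p u1 u1 + ip n p u2 u2 + ip n p u3 u3 + ip n p u4 u4).
Proof.
  rewrite !ip_addl, !ip_addr.
  rewrite (ip_comm n p u2 u1), (ip_comm n p u3 u1), (ip_comm n p u4 u1),
          (ip_comm n p u3 u2), (ip_comm n p u4 u2), (ip_comm n p u4 u3).
  pose proof (ip_sub_nonneg u1 u2). pose proof (ip_sub_nonneg u1 u3).
  pose proof (ip_sub_nonneg u1 u4). pose proof (ip_sub_nonneg u2 u3).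
  pose proof (ip_sub_nonneg u2 u4). pose proof (ip_sub_nonneg u3 u4).
  lra.
Qed.
Lemma Hstack_norm z : ip n p (Hstack n z) (Hstack n z) <= ip n p z z.
Proof.
  rewrite !ip_slices. apply fsum_le; intros l Hl.
  unfold dn, slice, Hstack. rewrite fsum_const.
  exact (H_norm n (slice z l)).
Qed.
End Young.

Section Main.
Variables n p : nat.
Variable A : nat -> nat -> R.
Hypothesis HAsym : forall i j, A i j = A j i.
Hypothesis HAnn : forall i j, 0 <= A i j.
Hypothesis Hconn : connected n A.
Variables rho rho2 : R.
Hypothesis Hrho : largest_eigenvalue n (laplacian n A) rho.
Hypothesis Hrho2 : smallest_pos_eigenvalue n (laplacian n A) rho2.
Variable Q : nat -> nat -> R.
Hypothesis HQ : mp_pinv n (laplacian n A) Q.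
Variable F : nat -> vec -> R.
Variable G : nat -> vec -> vec.
Hypothesis HG : forall i x, (i < n)%nat -> is_grad p (F i) (G i x) x.
Variable fstar : R.
Variable Lf : R.
Hypothesis HLip : forall i x y, (i < n)%nat ->
            norm p (vsub (G i x) (G i y)) <= Lf * norm p (vsub x y).
Variables alpha beta eta : R.
Hypothesis Hab : alpha > beta.
Hypothesis Hb : beta > 0.
Hypothesis Heta : eta > 0.
Variables X Vv : nat -> nat -> vec.
Hypothesis Hv0 : forall l, (l < p)%nat -> fsum n (fun j => Vv 0%nat j l) = 0.
Hypothesis HXup : forall k i l, (i < n)%nat -> (l < p)%nat ->
     X (S k) i l = X k i l - eta * (alpha * fsum n (fun j => laplacian n A i j * X k j l)
                                    + beta * Vv k i l + G i (X k i) l).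
Hypothesis HVup : forall k i l, (i < n)%nat -> (l < p)%nat ->
     Vv (S k) i l = Vv k i l + eta * beta * fsum n (fun j => laplacian n A i j * X k j l).
Hypothesis Hspec : spec_prop.

Local Notation L := (laplacian n A).

Lemma Lsum0' (z : nat -> vec) l : fsum n (fun j => fsum n (fun m => L j m * z m l)) = 0.
Proof. exact (L_sum0 n A HAsym (slice z l)). Qed.

Lemma v_avg0 k l : (l < p)%nat -> fsum n (fun j => Vv k j l) = 0.
Proof.
  intros Hl. induction k.
  - apply Hv0; auto.
  - rewrite (fsum_ext n _ (fun j => Vv k j l + eta * beta * fsum n (fun m => L j m * X k m l))).
    2: { intros j Hj. apply HVup; auto. }
    rewrite fsum_plus, fsum_scal, IHk, Lsum0'. ring.
Qed.

Lemma avg_x1 k l : (l < p)%nat ->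
  avg n (X (S k)) l = avg n (X k) l - eta * avg n (gstack G (X k)) l.
Proof.
  intros Hl. unfold avg.
  rewrite (fsum_ext n _ (fun i => X k i l - eta * (alpha * fsum n (fun j => L i j * X k j l)
                                    + beta * Vv k i l + G i (X k i) l))).
  2: { intros i Hi. apply HXup; auto. }
  rewrite fsum_minus, fsum_scal, !fsum_plus, !fsum_scal, Lsum0', v_avg0 by auto.
  unfold gstack. ring.
Qed.


Lemma npos : (0 < n)%nat.
Proof. exact (n_pos n A rho2 Hrho2). Qed.

Lemma KK z i l : (i < n)%nat -> Kst n (Kst n z) i l = Kst n z i l.
Proof. exact (KKs n A rho2 Hrho2 z i l). Qed.
Lemma KQ z i l : (i < n)%nat -> Kst n (St n Q z) i l = St n Q z i l.
Proof. exact (KQs n A HAsym HAnn Hconn rho2 Hrho2 Q HQ z i l). Qed.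
Lemma QK z i l : (i < n)%nat -> St n Q (Kst n z) i l = St n Q z i l.
Proof. exact (QKs n A HAsym HAnn Hconn rho2 Hrho2 Q HQ z i l). Qed.
Lemma QL z i l : (i < n)%nat -> St n Q (St n L z) i l = Kst n z i l.
Proof. exact (QLs n A HAsym HAnn Hconn rho2 Hrho2 Q HQ z i l). Qed.
Lemma KL z i l : (i < n)%nat -> Kst n (St n L z) i l = St n L z i l.
Proof. exact (KLs n A HAsym z i l). Qed.
Lemma LK z i l : (i < n)%nat -> St n L (Kst n z) i l = St n L z i l.
Proof. exact (LKs n A z i l). Qed.
Lemma Qsym z w : ip n p z (St n Q w) = ip n p (St n Q z) w.
Proof. exact (StQ_sym n A HAsym HAnn Hconn rho2 Hrho2 Q HQ p z w). Qed.
Lemma Lsym z w : ip n p z (St n L w) = ip n p (St n L z) w.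
Proof. exact (StL_sym n A HAsym p z w). Qed.

Lemma Kip z w : ip n p z (Kst n w) = ip n p (Kst n z) (Kst n w).
Proof.
  rewrite Kst_sym. rewrite (Kst_sym n p (Kst n z) w). apply ip_ext; auto.
  intros; rewrite KK; auto.
Qed.

Lemma qK z : ip n p z (St n Q z) = ip n p (Kst n z) (St n Q (Kst n z)).
Proof.
  rewrite (ip_ext n p z z (St n Q z) (Kst n (St n Q z))); auto.
  2: { intros; rewrite KQ; auto. }
  rewrite Kst_sym. apply ip_ext; auto. intros; rewrite QK; auto.
Qed.

Lemma LyapE (x v : nat -> vec) :
  Lyap n p alpha beta Q F G fstar x v =
   / 2 * ip n p (Kst n x) (Kst n x)
 + / 2 * ip n p (Kst n (wstack n beta G x v)) (St n Q (Kst n (wstack n beta G x v)))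
 + / 2 * (alpha / beta) * ip n p (Kst n (wstack n beta G x v)) (Kst n (wstack n beta G x v))
 + ip n p (Kst n x) (Kst n (wstack n beta G x v))
 + INR n * (fglob n F (avg n x) - fstar).
Proof.
  set (w := wstack n beta G x v).
  unfold Lyap, quad. fold w. rewrite !bil_St.
  rewrite (ip_ext n p x x (St n (Kmat n) x) (Kst n x)); auto.
  2: { intros; apply St_Kmat; auto. }
  rewrite (ip_ext n p x x (St n (Kmat n) w) (Kst n w)); auto.
  2: { intros; apply St_Kmat; auto. }
  rewrite (ip_ext n p w w (St n (fun i j => Q i j + alpha / beta * Kmat n i j) w)
             (vadd (St n Q w) (vscal (alpha / beta) (Kst n w)))); auto.
  2: { intros i l Hi Hl. unfold vadd, vscal. rewrite <- St_Kmat by auto.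
       unfold St. rewrite <- fsum_scal, <- fsum_plus. apply fsum_ext; intros; ring. }
  rewrite ip_addr, ip_scalr, (qK w), (Kip x x), (Kip w w), (Kip x w). ring.
Qed.

Lemma main_step k :
    Lyap n p alpha beta Q F G fstar (X (S k)) (Vv (S k))
    <= Lyap n p alpha beta Q F G fstar (X k) (Vv k)
       - eta * (((alpha - beta) * rho2 - / 2 * (2 + 3 * Lf ^ 2)) - eta * (beta ^ 2 * rho + (2 * alpha ^ 2 + beta ^ 2) * rho ^ 2 + 5 / 2 * Lf ^ 2)) * quad n p (Kmat n) (X k)
       - eta * ((beta - / 2 - alpha / (2 * beta ^ 2) - / (2 * beta * rho2)) - eta * (2 * beta ^ 2 + / 2)) * quad n p (Kmat n) (wstack n beta G (X k) (Vv k))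
       - eta * ((/ 4 - / (2 * beta) * (/ beta + / rho2 + alpha / beta) * Lf ^ 2) - eta * (/ beta ^ 2 * (1 + / rho2 + alpha / beta) * Lf ^ 2 + Lf * (1 + Lf) / 2)) * sqn_stack n p (Hstack n (gstack G (X k)))
       - eta / 4 * sqn_stack n p (Hstack n (g0stack n G (X k))).
Proof.
  pose proof npos as Hn.
  pose proof (rho2_pos n A rho2 Hrho2) as Hr2.
  pose proof (rho_ge_rho2 n A rho rho2 Hrho Hrho2) as Hrr.
  set (x := X k). set (x1 := X (S k)). set (v := Vv k). set (v1 := Vv (S k)).
  set (g := gstack G x). set (g0 := g0stack n G x). set (g01 := g0stack n G x1).
  set (w := wstack n beta G x v). set (w1 := wstack n beta G x1 v1).
  set (a := Kst n x). set (l0 := St n L x). set (b := Kst n w).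
  set (dd := fun i l => g i l - g0 i l). set (D := Kst n dd).
  set (ee := fun i l => / beta * (g01 i l - g0 i l)). set (E := Kst n ee).
  assert (Hx1 : forall i l, (i < n)%nat -> (l < p)%nat ->
     x1 i l = x i l - eta * (alpha * l0 i l + beta * v i l + g i l)).
  { intros i l Hi Hl. apply HXup; auto. }
  assert (Hv1 : forall i l, (i < n)%nat -> (l < p)%nat ->
     v1 i l = v i l + eta * beta * l0 i l).
  { intros i l Hi Hl. apply HVup; auto. }
  assert (Hav1 : forall l, (l < p)%nat -> avg n x1 l = avg n x l - eta * avg n g l).
  { intros l Hl. apply avg_x1; auto. }
  assert (Hv0' : forall l, (l < p)%nat -> avg n v l = 0).
  { intros l Hl. unfold avg. unfold v. rewrite v_avg0 by auto. ring. }
  assert (Hv10 : forall l, (l < p)%nat -> avg n v1 l = 0).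
  { intros l Hl. unfold avg. unfold v1. rewrite v_avg0 by auto. ring. }
  assert (Havw : forall l, (l < p)%nat -> avg n w l = / beta * avg n g0 l).
  { intros l Hl. unfold w, wstack, avg. rewrite fsum_plus, fsum_scal.
    unfold v. rewrite v_avg0 by auto. fold g0. ring. }
  assert (Havw1 : forall l, (l < p)%nat -> avg n w1 l = / beta * avg n g01 l).
  { intros l Hl. unfold w1, wstack, avg. rewrite fsum_plus, fsum_scal.
    unfold v1. rewrite v_avg0 by auto. fold g01. ring. }
  assert (Havd : forall l, avg n dd l = avg n g l - avg n g0 l).
  { intros l. unfold dd, avg. rewrite fsum_minus. ring. }
  assert (Have : forall l, avg n ee l = / beta * (avg n g01 l - avg n g0 l)).
  { intros l. unfold ee, avg. rewrite fsum_scal, fsum_minus. ring. }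
  set (a1c := vadd a (vscal (- eta) (vadd (vscal alpha l0) (vadd (vscal beta b) D)))).
  set (b1c := vadd b (vadd (vscal (eta * beta) l0) E)).
  assert (E1 : forall i l, (i < n)%nat -> (l < p)%nat -> Kst n x1 i l = a1c i l).
  { intros i l Hi Hl. unfold a1c, vadd, vscal. unfold Kst at 1.
    rewrite Hx1, Hav1 by auto. unfold a, b, D, Kst. rewrite Havw, Havd by auto.
    unfold w, wstack, dd. fold g0. field. lra. }
  assert (E2 : forall i l, (i < n)%nat -> (l < p)%nat -> Kst n w1 i l = b1c i l).
  { intros i l Hi Hl. unfold b1c, vadd, vscal. unfold Kst at 1.
    rewrite Havw1 by auto. unfold w1 at 1, wstack. rewrite Hv1 by auto.
    unfold b, E, Kst. rewrite Havw, Have by auto.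
    unfold w, wstack, ee. fold g0 g01. field. lra. }
  assert (QKx : quad n p (Kmat n) x = ip n p a a).
  { unfold quad. rewrite bil_St. transitivity (ip n p x (Kst n x)).
    - apply ip_ext; auto. intros; apply St_Kmat; auto.
    - exact (Kip x x). }
  assert (QKw : quad n p (Kmat n) w = ip n p b b).
  { unfold quad. rewrite bil_St. transitivity (ip n p w (Kst n w)).
    - apply ip_ext; auto. intros; apply St_Kmat; auto.
    - exact (Kip w w). }
  rewrite QKx, QKw.
  rewrite (LyapE x1 v1), (LyapE x v). fold w w1 a b.
  rewrite (ip_ext n p (Kst n x1) a1c (Kst n x1) a1c) by auto.
  rewrite (ip_ext n p (Kst n w1) b1c (Kst n w1) b1c) by auto.
  rewrite (ip_ext n p (Kst n x1) a1c (Kst n w1) b1c) by auto.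
  rewrite (ip_ext n p (Kst n w1) b1c (St n Q (Kst n w1)) (St n Q b1c)) by
    (auto; intros i0 l1 Hi0 Hl1; apply (St_ext n p); auto).
  unfold a1c, b1c. rewrite !St_add, !St_scal.
  repeat progress (rewrite ?ip_addl, ?ip_addr, ?ip_scall, ?ip_scalr).
  assert (QA1 : ip n p b (St n Q l0) = ip n p a b).
  { rewrite ip_comm. apply ip_ext; auto. intros; unfold l0, a; rewrite QL; auto. }
  assert (QA2 : ip n p l0 (St n Q l0) = ip n p a l0).
  { rewrite ip_comm. apply ip_ext; auto. intros; unfold l0, a; rewrite QL; auto. }
  assert (QA3 : ip n p E (St n Q l0) = ip n p a E).
  { rewrite ip_comm. apply ip_ext; auto. intros; unfold l0, a; rewrite QL; auto. }
  assert (QA4 : ip n p l0 (St n Q b) = ip n p a b).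
  { rewrite Qsym. apply ip_ext; auto. intros; unfold l0, a; rewrite QL; auto. }
  assert (QA5 : ip n p l0 (St n Q E) = ip n p a E).
  { rewrite Qsym. apply ip_ext; auto. intros; unfold l0, a; rewrite QL; auto. }
  assert (QA6 : ip n p E (St n Q b) = ip n p b (St n Q E)).
  { rewrite Qsym. apply ip_comm. }
  Ltac canon n p a l0 b D E QA1 QA2 QA3 QA4 QA5 QA6 :=
    rewrite ?QA1, ?QA2, ?QA3, ?QA4, ?QA5, ?QA6,
      ?(ip_comm n p l0 a), ?(ip_comm n p b a), ?(ip_comm n p D a), ?(ip_comm n p E a),
      ?(ip_comm n p b l0), ?(ip_comm n p D l0), ?(ip_comm n p E l0),
      ?(ip_comm n p D b), ?(ip_comm n p E b), ?(ip_comm n p E D).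
  canon n p a l0 b D E QA1 QA2 QA3 QA4 QA5 QA6.
  set (G2 := ip n p (Hstack n g) (Hstack n g)).
  set (H0 := ip n p (Hstack n g0) (Hstack n g0)).
  change (sqn_stack n p (Hstack n g)) with G2.
  change (sqn_stack n p (Hstack n g0)) with H0.
  assert (Bdd : ip n p dd dd <= Lf * Lf * ip n p a a).
  { change (fsum n (fun i => sqn p (vsub (G i (x i)) (G i (avg n x))))
            <= Lf * Lf * fsum n (fun i => sqn p (vsub (x i) (avg n x)))).
    rewrite <- fsum_scal. apply fsum_le; intros i Hi. apply lip_sq, HLip; auto. }
  assert (Hsq1 : sqn p (vsub (avg n x1) (avg n x)) = eta * eta * sqn p (avg n g)).
  { rewrite (sqn_ext p _ (fun l => (- eta) * avg n g l)), sqn_scal. ring.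
    intros l Hl. unfold vsub. rewrite Hav1 by auto. ring. }
  assert (Bee : ip n p ee ee <= eta * eta * Lf * Lf * (/ beta * / beta) * G2).
  { transitivity (fsum n (fun i => / beta * / beta * sqn p (vsub (G i (avg n x1)) (G i (avg n x))))).
    { right. unfold ip. apply fsum_ext; intros i Hi. unfold sqn, dot. rewrite <- fsum_scal.
      apply fsum_ext; intros l Hl. unfold ee, vsub, g01, g0, g0stack. ring. }
    transitivity (fsum n (fun i => / beta * / beta * (Lf * Lf * (eta * eta * sqn p (avg n g))))).
    { apply fsum_le; intros i Hi. apply Rmult_le_compat_l.
      - apply Rmult_le_pos; left; apply Rinv_0_lt_compat; lra.
      - rewrite <- Hsq1. apply lip_sq, HLip; auto. }
    right. unfold G2, ip, Hstack. rewrite (fsum_ext n _ (fun i => (eta * eta * Lf * Lf * (/ beta * / beta)) * sqn p (avg n g)))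
      by (intros; ring).
    rewrite fsum_scal. reflexivity. }
  Ltac expand_in H := repeat progress (rewrite ?St_add, ?St_scal, ?ip_addl, ?ip_addr, ?ip_scall, ?ip_scalr in H).
  Ltac canon_in H n p a l0 b D E QA1 QA2 QA3 QA4 QA5 QA6 :=
    rewrite ?QA1, ?QA2, ?QA3, ?QA4, ?QA5, ?QA6,
      ?(ip_comm n p l0 a), ?(ip_comm n p b a), ?(ip_comm n p D a), ?(ip_comm n p E a),
      ?(ip_comm n p b l0), ?(ip_comm n p D l0), ?(ip_comm n p E l0),
      ?(ip_comm n p D b), ?(ip_comm n p E b), ?(ip_comm n p E D) in H.
  assert (BLq : rho2 * ip n p a a <= ip n p a l0).
  { pose proof (F5s n A HAsym HAnn Hconn rho2 Hrho2 Q HQ Hspec p x) as H. fold a l0 in H.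
    rewrite (ip_ext n p x x l0 (Kst n l0)) in H; auto.
    2: { intros; unfold l0; rewrite KL; auto. }
    rewrite Kst_sym in H. exact H. }
  assert (BLq2 : ip n p a l0 <= rho * ip n p a a).
  { pose proof (sp3s n A HAsym rho Hrho Hspec p a) as H.
    rewrite (ip_ext n p a a (St n L a) l0) in H; auto.
    intros; unfold a, l0; rewrite LK; auto. }
  assert (Bll : ip n p l0 l0 <= rho * rho * ip n p a a).
  { pose proof (sp1s n A HAsym HAnn rho Hrho Hspec p a) as H.
    rewrite (ip_ext n p (St n L a) l0 (St n L a) l0) in H; auto;
    intros; unfold a, l0; rewrite LK; auto. }
  assert (BDD : ip n p D D <= ip n p dd dd) by exact (Knorms n A rho2 Hrho2 p dd).
  assert (BEE : ip n p E E <= ip n p ee ee) by exact (Knorms n A rho2 Hrho2 p ee).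
  assert (Bqb : rho2 * ip n p b (St n Q b) <= ip n p b b).
  { pose proof (q_bd n A HAsym HAnn Hconn rho2 Hrho2 Q HQ Hspec p w) as H.
    rewrite (qK w) in H. fold b in H.
    exact H. }
  assert (BqE : rho2 * ip n p E (St n Q E) <= ip n p E E).
  { pose proof (q_bd n A HAsym HAnn Hconn rho2 Hrho2 Q HQ Hspec p E) as H.
    rewrite (ip_ext n p (Kst n E) E (Kst n E) E) in H. exact H.
    all: intros; unfold E; rewrite KK; auto. }
  assert (BqM := q_nn n A HAsym HAnn Hconn rho2 Hrho2 Q HQ p (vadd (vscal eta b) (vscal (- beta) E))).
  expand_in BqM. canon_in BqM n p a l0 b D E QA1 QA2 QA3 QA4 QA5 QA6.
  assert (BqS := q_nn n A HAsym HAnn Hconn rho2 Hrho2 Q HQ p (vadd (vscal (eta * beta) l0) (vscal (- 1) E))).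
  expand_in BqS. canon_in BqS n p a l0 b D E QA1 QA2 QA3 QA4 QA5 QA6.
  assert (BaD := ip_nonneg n p (vadd a D)).
  expand_in BaD. canon_in BaD n p a l0 b D E QA1 QA2 QA3 QA4 QA5 QA6.
  assert (BbD := ip_nonneg n p (vadd b D)).
  expand_in BbD. canon_in BbD n p a l0 b D E QA1 QA2 QA3 QA4 QA5 QA6.
  assert (BaE := ip_nonneg n p (vadd (vscal eta a) (vscal (- 1) E))).
  expand_in BaE. canon_in BaE n p a l0 b D E QA1 QA2 QA3 QA4 QA5 QA6.
  assert (BbE := ip_nonneg n p (vadd (vscal eta b) (vscal (- beta) E))).
  expand_in BbE. canon_in BbE n p a l0 b D E QA1 QA2 QA3 QA4 QA5 QA6.
  assert (BW := young4 n p (vscal (eta * (alpha - beta)) l0) (vscal (eta * beta) b) (vscal eta D) (vscal (- 1) E)).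
  expand_in BW. canon_in BW n p a l0 b D E QA1 QA2 QA3 QA4 QA5 QA6.
  assert (BS := young2v n p (vscal (eta * beta) l0) E).
  expand_in BS. canon_in BS n p a l0 b D E QA1 QA2 QA3 QA4 QA5 QA6.
  set (HH := ip n p (Hstack n g0) (Hstack n g)).
  assert (Hproj : forall z w0, ip n p z (Hstack n w0) = ip n p (Hstack n z) (Hstack n w0)).
  { intros z w0. rewrite !ip_slices. apply fsum_ext; intros l Hl.
    unfold dn, slice, Hstack. rewrite fsum_scalr, fsum_scalr, fsum_const.
    unfold avg. field. apply not_0_INR; lia. }
  assert (HF : INR n * (fglob n F (avg n x1) - fstar) - INR n * (fglob n F (avg n x) - fstar)
               <= - eta * HH + eta * eta * (Lf / 2) * G2).
  { assert (Eq : INR n * (fglob n F (avg n x1) - fstar) - INR n * (fglob n F (avg n x) - fstar)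
               = fsum n (fun i => F i (avg n x1) - F i (avg n x))).
    { unfold fglob. rewrite fsum_minus. field. apply not_0_INR; lia. }
    rewrite Eq.
    transitivity (fsum n (fun i => - eta * dot p (g0 i) (avg n g) + Lf / 2 * (eta * eta * sqn p (avg n g)))).
    - apply fsum_le; intros i Hi.
      pose proof (descent p (F i) (G i) Lf (fun z => HG i z Hi) (fun z z' => HLip i z z' Hi)
                    (avg n x) (avg n x1)) as Hd.
      rewrite Hsq1 in Hd.
      assert (Hdot : dot p (G i (avg n x)) (vsub (avg n x1) (avg n x)) = - eta * dot p (g0 i) (avg n g)).
      { unfold dot. rewrite <- fsum_scal. apply fsum_ext; intros l Hl. unfold vsub.
        rewrite Hav1 by auto. unfold g0, g0stack. ring. }
      rewrite Hdot in Hd. lra.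
    - right. rewrite fsum_plus, fsum_scal, fsum_scal, fsum_scal.
      change (fsum n (fun i => dot p (g0 i) (avg n g))) with (ip n p g0 (Hstack n g)).
      change (fsum n (fun _ => sqn p (avg n g))) with G2.
      rewrite Hproj. fold HH. ring. }
  assert (HHd : ip n p (Hstack n dd) (Hstack n dd) = G2 - HH - HH + H0).
  { rewrite (ip_ext n p (Hstack n dd) (vadd (Hstack n g) (vscal (-1) (Hstack n g0)))
                   (Hstack n dd) (vadd (Hstack n g) (vscal (-1) (Hstack n g0)))).
    - rewrite !ip_addl, !ip_addr, !ip_scall, !ip_scalr.
      rewrite (ip_comm n p (Hstack n g) (Hstack n g0)). fold G2 H0 HH. ring.
    - intros i l _ _. unfold Hstack, vadd, vscal. rewrite Havd. ring.
    - intros i l _ _. unfold Hstack, vadd, vscal. rewrite Havd. ring. }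
  assert (Bhd : ip n p (Hstack n dd) (Hstack n dd) <= ip n p dd dd) by apply Hstack_norm.
  assert (Hib : beta * (/ beta) = 1) by (field; lra).
  assert (Hir : rho2 * (/ rho2) = 1) by (field; lra).
  assert (ibpos : 0 < (/ beta)) by (apply Rinv_0_lt_compat; lra).
  assert (irpos : 0 < (/ rho2)) by (apply Rinv_0_lt_compat; lra).
  assert (EEb : ip n p E E <= eta * eta * Lf * Lf * ((/ beta) * (/ beta)) * G2) by lra.
  assert (G2nn : 0 <= G2) by apply ip_nonneg.
  assert (H0nn : 0 <= H0) by apply ip_nonneg.
  assert (A2nn : 0 <= ip n p a a) by apply ip_nonneg.
  assert (B2nn : 0 <= ip n p b b) by apply ip_nonneg.
  assert (qbbb : ip n p b (St n Q b) <= (/ rho2) * ip n p b b).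
  { apply (Rmult_le_reg_l rho2); [lra|].
    replace (rho2 * ((/ rho2) * ip n p b b)) with (ip n p b b) by (field; lra). exact Bqb. }
  assert (qEEb : ip n p E (St n Q E) <= (/ rho2) * ip n p E E).
  { apply (Rmult_le_reg_l rho2); [lra|].
    replace (rho2 * ((/ rho2) * ip n p E E)) with (ip n p E E) by (field; lra). exact BqE. }
  assert (T1 : eta * (alpha - beta) * (rho2 * ip n p a a) <= eta * (alpha - beta) * ip n p a l0).
  { apply Rmult_le_compat_l; [apply Rmult_le_pos; lra| exact BLq]. }
  assert (T2 : 0 <= eta / 2 * (ip n p a a + 2 * ip n p a D + Lf * Lf * ip n p a a)).
  { apply Rmult_le_pos; [lra|]. lra. }
  assert (T3 : 0 <= eta / 2 * (ip n p b b + 2 * ip n p b D + Lf * Lf * ip n p a a)).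
  { apply Rmult_le_pos; [lra|]. lra. }
  assert (T4 : ip n p b (St n Q E) <= eta * (/ beta) * (/ rho2) / 2 * ip n p b b + eta * Lf * Lf * (/ beta) * (/ rho2) / 2 * G2).
  { apply (Rmult_le_reg_l (2 * eta * beta)); [apply Rmult_lt_0_compat; lra|].
    replace (2 * eta * beta * (eta * (/ beta) * (/ rho2) / 2 * ip n p b b + eta * Lf * Lf * (/ beta) * (/ rho2) / 2 * G2))
      with (eta * eta * ((/ rho2) * ip n p b b) + beta * beta * ((/ rho2) * (eta * eta * Lf * Lf * ((/ beta) * (/ beta)) * G2)))
      by (field; lra).
    assert (eta * eta * ip n p b (St n Q b) <= eta * eta * ((/ rho2) * ip n p b b))
      by (apply Rmult_le_compat_l; [nra| exact qbbb]).
    assert (beta * beta * ip n p E (St n Q E) <= beta * beta * ((/ rho2) * (eta * eta * Lf * Lf * ((/ beta) * (/ beta)) * G2))).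
    { apply Rmult_le_compat_l; [nra|]. apply Rle_trans with ((/ rho2) * ip n p E E); auto.
      apply Rmult_le_compat_l; lra. }
    lra. }
  assert (HbE : ip n p b E <= eta * (/ beta) / 2 * ip n p b b + eta * Lf * Lf * (/ beta) / 2 * G2).
  { apply (Rmult_le_reg_l (2 * eta * beta)); [apply Rmult_lt_0_compat; lra|].
    replace (2 * eta * beta * (eta * (/ beta) / 2 * ip n p b b + eta * Lf * Lf * (/ beta) / 2 * G2))
      with (eta * eta * ip n p b b + beta * beta * (eta * eta * Lf * Lf * ((/ beta) * (/ beta)) * G2))
      by (field; lra).
    assert (beta * beta * ip n p E E <= beta * beta * (eta * eta * Lf * Lf * ((/ beta) * (/ beta)) * G2))
      by (apply Rmult_le_compat_l; [nra| exact EEb]).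
    lra. }
  assert (T5 : alpha / beta * ip n p b E <= alpha / beta * (eta * (/ beta) / 2 * ip n p b b + eta * Lf * Lf * (/ beta) / 2 * G2)).
  { apply Rmult_le_compat_l; [| exact HbE]. unfold Rdiv. apply Rmult_le_pos; [lra| left; exact ibpos]. }
  assert (T6 : ip n p a E <= eta / 2 * ip n p a a + eta * Lf * Lf * (/ beta) * (/ beta) / 2 * G2).
  { apply (Rmult_le_reg_l (2 * eta)); [lra|].
    replace (2 * eta * (eta / 2 * ip n p a a + eta * Lf * Lf * (/ beta) * (/ beta) / 2 * G2))
      with (eta * eta * ip n p a a + eta * eta * Lf * Lf * ((/ beta) * (/ beta)) * G2) by (field; lra).
    lra. }
  assert (P71 : eta * eta * (alpha - beta) * (alpha - beta) * ip n p l0 l0 <=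
                eta * eta * (alpha - beta) * (alpha - beta) * (rho * rho * ip n p a a)).
  { apply Rmult_le_compat_l; [| exact Bll].
    replace (eta * eta * (alpha - beta) * (alpha - beta)) with ((eta * (alpha - beta)) * (eta * (alpha - beta))) by ring.
    apply Rle_0_sqr. }
  assert (P72 : eta * eta * ip n p D D <= eta * eta * (Lf * Lf * ip n p a a)).
  { apply Rmult_le_compat_l; [apply Rle_0_sqr| lra]. }
  set (c8 := / 2 * (alpha / beta) - / 2).
  assert (c8nn : 0 <= c8).
  { unfold c8. assert (alpha / beta > 1).
    { apply (Rmult_lt_reg_r beta); [lra|]. unfold Rdiv. rewrite Rmult_assoc, Rinv_l by lra. lra. }
    lra. }
  assert (T8 : forall Z, Z <= 2 * (eta * beta * (eta * beta * ip n p l0 l0) + ip n p E E) ->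
     c8 * Z <= (alpha * beta - beta * beta) * eta * eta * rho * rho * ip n p a a
               + (alpha * (/ beta) - 1) * eta * eta * Lf * Lf * (/ beta) * (/ beta) * G2).
  { intros Z HZ. apply Rle_trans with (c8 * (2 * (eta * beta * (eta * beta * (rho * rho * ip n p a a))
                                                + eta * eta * Lf * Lf * ((/ beta) * (/ beta)) * G2))).
    - apply Rmult_le_compat_l; auto.
      assert (eta * beta * (eta * beta * ip n p l0 l0) <= eta * beta * (eta * beta * (rho * rho * ip n p a a))).
      { apply Rmult_le_compat_l; [nra|]. apply Rmult_le_compat_l; [nra| exact Bll]. }
      lra.
    - right. unfold c8. field. lra. }
  specialize (T8 _ BS).
  assert (P91 : eta * beta * (eta * beta * ip n p a l0) <= eta * beta * (eta * beta * (rho * ip n p a a))).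
  { apply Rmult_le_compat_l; [nra|]. apply Rmult_le_compat_l; [nra| exact BLq2]. }
  assert (P93 : (/ rho2) * ip n p E E <= (/ rho2) * (eta * eta * Lf * Lf * ((/ beta) * (/ beta)) * G2)).
  { apply Rmult_le_compat_l; lra. }
  assert (Pf : eta / 2 * ip n p (Hstack n dd) (Hstack n dd) <= eta / 2 * (Lf * Lf * ip n p a a)).
  { apply Rmult_le_compat_l; lra. }
  assert (HC : alpha / beta * (eta * beta) * ip n p l0 b = alpha * eta * ip n p l0 b).
  { field. lra. }
  assert (N1 : 0 <= eta * eta * alpha * beta * rho * rho * ip n p a a).
  { pose proof (Rle_trans _ _ _ (Rlt_le _ _ Hr2) Hrr).
    repeat apply Rmult_le_pos; lra. }
  assert (N2 : 0 <= eta * eta * Lf * Lf * ip n p a a).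
  { apply Rmult_le_pos; auto.
    replace (eta * eta * Lf * Lf) with ((eta * Lf) * (eta * Lf)) by ring. apply Rle_0_sqr. }
  assert (N3 : 0 <= eta * eta * ip n p b b) by (apply Rmult_le_pos; [apply Rle_0_sqr| auto]).
  assert (N4 : 0 <= eta * eta * Lf * Lf * G2).
  { apply Rmult_le_pos; auto.
    replace (eta * eta * Lf * Lf) with ((eta * Lf) * (eta * Lf)) by ring. apply Rle_0_sqr. }
  assert (N5 : 0 <= eta * G2) by (apply Rmult_le_pos; lra).
  assert (N6 : 0 <= eta * H0) by (apply Rmult_le_pos; lra).
  assert (eq3 : beta - / 2 - alpha / (2 * beta ^ 2) - / (2 * beta * rho2)
                = beta - / 2 - alpha * (/ beta) * (/ beta) / 2 - (/ beta) * (/ rho2) / 2) by (field; lra).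
  assert (eq5 : / 4 - / (2 * beta) * (/ beta + / rho2 + alpha / beta) * Lf ^ 2
                = / 4 - (/ beta) / 2 * ((/ beta) + (/ rho2) + alpha * (/ beta)) * Lf ^ 2) by (field; lra).
  assert (eq6 : / beta ^ 2 * (1 + / rho2 + alpha / beta) * Lf ^ 2 + Lf * (1 + Lf) / 2
                = (/ beta) * (/ beta) * (1 + (/ rho2) + alpha * (/ beta)) * Lf ^ 2 + Lf * (1 + Lf) / 2) by (field; lra).
  assert (HHe : eta * HH = eta / 2 * (G2 + H0 - ip n p (Hstack n dd) (Hstack n dd))).
  { rewrite HHd. field. }
  rewrite eq3, eq5, eq6.
  clear - HHe T1 T2 T3 T4 T5 T6 P71 P72 T8 P91 P93 Pf HC N1 N2 N3 N4 N5 N6 HF HHd Bhd Bdd BDD EEb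
          qEEb BqS BW Hib.
  unfold c8 in T8. unfold Rdiv in *. lra.
Qed.
End Main.

Theorem lemma6
  (n p : nat)
  (* weighted undirected graph with weights A, Laplacian L *)
  (A : nat -> nat -> R)
  (HAsym : forall i j, A i j = A j i)
  (HAnn : forall i j, 0 <= A i j)
  (* (A1) *)
  (Hconn : connected n A)
  (rho rho2 : R)
  (Hrho : largest_eigenvalue n (laplacian n A) rho)
  (Hrho2 : smallest_pos_eigenvalue n (laplacian n A) rho2)
  (Q : nat -> nat -> R)
  (HQ : mp_pinv n (laplacian n A) Q)
  (* local costs and their gradients *)
  (F : nat -> vec -> R) (G : nat -> vec -> vec)
  (HG : forall i x, (i < n)%nat -> is_grad p (F i) (G i x) x)
  (* (A2) *)
  (fstar : R)
  (Hfstar_att : exists xs, fglob n F xs = fstar)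
  (Hfstar_low : forall x, fstar <= fglob n F x)
  (* (A3) *)
  (Lf : R)
  (HLip : forall i x y, (i < n)%nat ->
            norm p (vsub (G i x) (G i y)) <= Lf * norm p (vsub x y))
  (* parameters *)
  (alpha beta eta : R)
  (Hab : alpha > beta) (Hb : beta > 0) (Heta : eta > 0)
  (* Algorithm 1: X k i = x_{i,k}, Vv k i = v_{i,k} *)
  (X Vv : nat -> nat -> vec)
  (Hv0 : forall l, (l < p)%nat -> fsum n (fun j => Vv 0%nat j l) = 0)
  (HXup : forall k i l, (i < n)%nat -> (l < p)%nat ->
     X (S k) i l = X k i l - eta * (alpha * fsum n (fun j => laplacian n A i j * X k j l)
                                    + beta * Vv k i l + G i (X k i) l))
  (HVup : forall k i l, (i < n)%nat -> (l < p)%nat ->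
     Vv (S k) i l = Vv k i l + eta * beta * fsum n (fun j => laplacian n A i j * X k j l)) :
  let eps1 := (alpha - beta) * rho2 - / 2 * (2 + 3 * Lf ^ 2) in
  let eps2 := beta ^ 2 * rho + (2 * alpha ^ 2 + beta ^ 2) * rho ^ 2 + 5 / 2 * Lf ^ 2 in
  let eps3 := beta - / 2 - alpha / (2 * beta ^ 2) - / (2 * beta * rho2) in
  let eps4 := 2 * beta ^ 2 + / 2 in
  let eps5 := / 4 - / (2 * beta) * (/ beta + / rho2 + alpha / beta) * Lf ^ 2 in
  let eps6 := / beta ^ 2 * (1 + / rho2 + alpha / beta) * Lf ^ 2 + Lf * (1 + Lf) / 2 in
  forall k : nat,
    Lyap n p alpha beta Q F G fstar (X (S k)) (Vv (S k))
    <= Lyap n p alpha beta Q F G fstar (X k) (Vv k)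
       - eta * (eps1 - eta * eps2) * quad n p (Kmat n) (X k)
       - eta * (eps3 - eta * eps4) * quad n p (Kmat n) (wstack n beta G (X k) (Vv k))
       - eta * (eps5 - eta * eps6) * sqn_stack n p (Hstack n (gstack G (X k)))
       - eta / 4 * sqn_stack n p (Hstack n (g0stack n G (X k))).

Proof.
  intros eps1 eps2 eps3 eps4 eps5 eps6 k.
  eapply main_step; try eassumption. exact SpecM.spec_nat.
Qed.
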